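(* Let $x_j\to x_0$ in $\mathbb{T}^1$ and $y_j\to y_0$ with $y_j,y_0\in[0,1]$ (convergence in $\mathbb{R}$). Then for every integer $n\ge0$, $$\mu^n_{x_0}[0,y_0)\le\liminf_{j\to\infty}\mu^n_{x_j}[0,y_j]\le\limsup_{j\to\infty}\mu^n_{x_j}[0,y_j]\le\mu^n_{x_0}[0,y_0],$$ and $$\mu_{x_0}[0,y_0)\le\liminf_{j\to\infty}\mu_{x_j}[0,y_j]\le\limsup_{j\to\infty}\mu_{x_j}[0,y_j]\le\mu_{x_0}[0,y_0].$$ In particular, if $(x,y)\mapsto\mu_x[0,y]$ is discontinuous at $(x_0,y_0)$ then $\mu_{x_0}(\{y_0\})>0$.
   Context: Notation: $\mathbb{T}^1=\mathbb{R}/\mathbb{Z}$, $\mathbb{T}^2=\mathbb{T}^1\times\mathbb{T}^1$, $\lambda$ is Lebesgue probability measure on $\mathbb{T}^1$. For reals $a\le b\le a+1$, $[a,b]$ (resp. $[a,b)$) denotes the image in $\mathbb{T}^1$ of the real interval $[a,b]$ (resp. $[a,b)$); so $[0,1]=\mathbb{T}^1$, $[0,0]=\{0\}$. $P(x,y)=(x+\tfrac12,1-y)$ on $\mathbb{T}^2$. Standing setup: $\alpha$ is irrational, $R(x)=x+\alpha$ on $\mathbb{T}^1$. $r:\mathbb{T}^1\to\mathbb{R}$ is continuous with $r(x+\tfrac12)=-r(x)$, $r(0)=r(\tfrac12)=0$, $0<r(x)<\tfrac14$ for $x\in(0,\tfrac12)$, and such that $S(x,y)=(x+\alpha,\,y+r(x))$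 is a minimal homeomorphism of $\mathbb{T}^2$. Put $\sigma_x(y)=y+r(x)$, $\sigma_x^0=\mathrm{id}$, $\sigma^n_x=\sigma_{R^{n-1}(x)}\circ\cdots\circ\sigma_{R(x)}\circ\sigma_x$ ($n\ge1$), so $S^n(x,y)=(R^n(x),\sigma^n_x(y))$. Fix $x_1^*\in(0.1,0.2)\cap\mathbb{Q}$, $x_2^*=x_1^*+\tfrac12$, $y_1^*\in\mathbb{T}^1$, $y_2^*=1-y_1^*$, $z_j^*=(x_j^*,y_j^* )$, such that for all $m\in\mathbb{Z}$ and $j=1,2$ the second coordinate $Y$ of $S^m(z_j^* )$ satisfies $Y\neq0$ and $Y\ne -r(R^m(x_j^* ))$. Fix $\bar x_1<x_1^*<\bar x_2$ with $[\bar x_1,\bar x_2]\subset(0,\tfrac12)$ and continuous $\tilde\psi,\tilde\phi:[\bar x_1,\bar x_2]\to[0,1]$ with $\tilde\psi(\bar x_1)=0$, $\tilde\phi(\bar x_1)=1$, $\tilde\psi(\bar x_2)=1$, $\tilde\phi(\bar x_2)=0$, $\tilde\psi<\tilde\phi$ on $[\bar x_1,x_1^* )$, $\tilde\psi>\tilde\phi$ on $(x_1^*,\bar x_2]$, and $\tilde\psi(x_1^* )=\tilde\phi(x_1^* )\equiv y_1^*\pmod 1$. Define Borel probability measures $\mu_x^0$ on $\mathbb{T}^1$: $\mu^0_x=\lambda$ if $x\notin(\bar x_1,\bar x_2)\cup(\bar x_1+\tfrac12,\bar x_2+\tfrac12)$; $\mu^0_{x_j^*}=\delta_{y_j^*}$;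 for $x\in(\bar x_1,\bar x_2)\setminus\{x_1^*\}$, $\mu^0_x(A)=\lambda(A\cap I_x)/|\tilde\phi(x)-\tilde\psi(x)|$ where $I_x$ is the image in $\mathbb{T}^1$ of the real interval with endpoints $\tilde\psi(x),\tilde\phi(x)$; for $x=u+\tfrac12$ with $u\in(\bar x_1,\bar x_2)\setminus\{x_1^*\}$, $\mu^0_x(A)=\mu^0_u(\{1-y:y\in A\})$. For $n\ge0$ let $\mu^n_x(A)=\mu^0_{R^n(x)}(\sigma^n_x(A))$, and $\mu_x=\tfrac12\big(\lambda+\sum_{n\ge0}2^{-n-1}\mu^n_x\big)$. *)

(* Defs.v *)
From Stdlib Require Import Reals Lra ClassicalEpsilon.
Open Scope R_scope.

(* ---------- the circle T^1 = R/Z, points represented by reals ---------- *)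
Definition frac (z : R) : R := z - IZR (Int_part z).
Definition distT (a b : R) : R := Rmin (frac (a - b)) (1 - frac (a - b)).

Definition S_map (al : R) (r : R -> R) (p : R * R) : R * R :=
  (fst p + al, snd p + r (fst p)).
Definition S_inv (al : R) (r : R -> R) (p : R * R) : R * R :=
  (fst p - al, snd p - r (fst p - al)).
Definition S_iter (al : R) (r : R -> R) (m : Z) (p : R * R) : R * R :=
  match m with
  | Z0 => p
  | Zpos k => Nat.iter (Pos.to_nat k) (S_map al r) p
  | Zneg k => Nat.iter (Pos.to_nat k) (S_inv al r) p
  end.
Definition sigma (al : R) (r : R -> R) (n : nat) (x y : R) : R :=
  snd (Nat.iter n (S_map al r) (x, y)).

(* ---------- arcs of T^1 ----------
   Arc lo hi lc rc is the image in T^1 of the real interval from lo to hi,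
   closed at lo iff lc, closed at hi iff rc (always used with lo <= hi <= lo+1). *)
Record arc := Arc { a_lo : R; a_hi : R; a_lc : bool; a_rc : bool }.
Definition cc (a b : R) : arc := Arc a b true true.
Definition co (a b : R) : arc := Arc a b true false.

Definition in_arc (A : arc) (p : R) : Prop :=
  exists k : Z,
    (if a_lc A then a_lo A <= p + IZR k else a_lo A < p + IZR k) /\
    (if a_rc A then p + IZR k <= a_hi A else p + IZR k < a_hi A).

Definition shift (c : R) (A : arc) : arc :=
  Arc (a_lo A + c) (a_hi A + c) (a_lc A) (a_rc A).
Definition refl (A : arc) : arc :=
  Arc (1 - a_hi A) (1 - a_lo A) (a_rc A) (a_lc A).

Definition lam (A : arc) : R := a_hi A - a_lo A.
Definition ov (a b c d : R) : R := Rmax 0 (Rmin b d - Rmax a c).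
(* lambda(A ∩ I), I = image in T^1 of the real interval [c,d], 0<=c<=d<=1 *)
Definition lam_int (A : arc) (c d : R) : R :=
  let lo' := frac (a_lo A) in
  let hi' := a_hi A - a_lo A + lo' in
  ov lo' hi' c d + ov (lo' - 1) (hi' - 1) c d.

Definition dirac (y : R) (A : arc) : R :=
  if excluded_middle_informative (in_arc A y) then 1 else 0.

Definition Rin_open (a b z : R) : bool :=
  if Rlt_dec a z then (if Rlt_dec z b then true else false) else false.
Definition Req_b (a b : R) : bool := if Req_EM_T a b then true else false.

Definition mu0 (xb1 xb2 x1s y1s : R) (psi phi : R -> R) (x : R) (A : arc) : R :=
  let xr := frac x in
  let onI (u : R) (B : arc) :=
    lam_int B (Rmin (psi u) (phi u)) (Rmax (psi u) (phi u)) / Rabs (phi u - psi u) in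
  if Rin_open xb1 xb2 xr then
    (if Req_b xr x1s then dirac y1s A else onI xr A)
  else if Rin_open (xb1 + 1/2) (xb2 + 1/2) xr then
    (let u := xr - 1/2 in
     if Req_b u x1s then dirac (1 - y1s) A   (* x = x2*, y2* = 1 - y1* *)
     else onI u (refl A))
  else lam A.

(* mu^n_x(A) = mu^0_{R^n x}(sigma^n_x(A));  sigma^n_x is the translation
   by sigma^n_x(0). *)
Definition mun (al : R) (r : R -> R) (xb1 xb2 x1s y1s : R) (psi phi : R -> R)
    (n : nat) (x : R) (A : arc) : R :=
  mu0 xb1 xb2 x1s y1s psi phi (x + INR n * al) (shift (sigma al r n x 0) A).

Definition series (s : nat -> R) : R := epsilon (inhabits 0) (fun l => infinite_sum s l).

Definition mu (al : R) (r : R -> R) (xb1 xb2 x1s y1s : R) (psi phi : R -> R)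
    (x : R) (A : arc) : R :=
  / 2 * (lam A + series (fun n => (/ 2) ^ (S n) * mun al r xb1 xb2 x1s y1s psi phi n x A)).

Definition cont_on (a b : R) (f : R -> R) : Prop :=
  forall x, a <= x <= b -> forall eps, eps > 0 -> exists del, del > 0 /\
    forall x', a <= x' <= b -> Rabs (x' - x) < del -> Rabs (f x' - f x) < eps.

Definition liminf_ge (u : nat -> R) (a : R) : Prop :=
  forall eps, eps > 0 -> exists N, forall j, (j >= N)%nat -> a - eps <= u j.
Definition limsup_le (u : nat -> R) (b : R) : Prop :=
  forall eps, eps > 0 -> exists N, forall j, (j >= N)%nat -> u j <= b + eps.
Definition liminf_le_limsup (u : nat -> R) : Prop :=
  forall a b, a > b -> ~ (liminf_ge u a /\ limsup_le u b).

Definition cvT (xs : nat -> R) (x0 : R) : Prop :=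
  forall eps, eps > 0 -> exists N, forall j, (j >= N)%nat -> distT (xs j) x0 < eps.

Definition cont2_at (F : R -> R -> R) (x0 y0 : R) : Prop :=
  forall eps, eps > 0 -> exists del, del > 0 /\
    forall x y, 0 <= y <= 1 -> distT x x0 < del -> Rabs (y - y0) < del ->
      Rabs (F x y - F x0 y0) < eps.

(* Main.v *)
Require Import Defs.
From Stdlib Require Import Reals Lra Lia ClassicalEpsilon Classical.
Open Scope R_scope.

Lemma absle (x y : R) : Rabs x <= y <-> - y <= x <= y.
Proof. unfold Rabs; destruct (Rcase_abs x); split; intros; lra. Qed.
Lemma abslt (x y : R) : Rabs x < y <-> - y < x < y.
Proof. unfold Rabs; destruct (Rcase_abs x); split; intros; lra. Qed.

Lemma frac_range z : 0 <= frac z < 1.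
Proof. unfold frac; destruct (base_Int_part z); lra. Qed.

Lemma IZR_between0 (k : Z) : -1 < IZR k < 1 -> k = 0%Z.
Proof. intros [H1 H2]. apply lt_IZR in H1; apply lt_IZR in H2; lia. Qed.

Lemma frac_unique z (k : Z) f : 0 <= f < 1 -> z = IZR k + f -> frac z = f.
Proof.
  intros Hf Hz. unfold frac. destruct (base_Int_part z) as [H1 H2].
  assert (Int_part z - k = 0)%Z.
  { apply IZR_between0. rewrite minus_IZR. split; lra. }
  assert (Int_part z = k) by lia. rewrite H0. lra.
Qed.

Lemma frac_shift z (k : Z) : frac (z + IZR k) = frac z.
Proof.
  apply (frac_unique _ (Int_part z + k)%Z). apply frac_range.
  unfold frac. rewrite plus_IZR. ring.
Qed.

Lemma frac_id z : 0 <= z < 1 -> frac z = z.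
Proof. intros. apply (frac_unique _ 0%Z); auto. simpl; ring. Qed.

Lemma frac_int z : z = IZR (Int_part z) + frac z.
Proof. unfold frac; ring. Qed.

Definition Gf (lo hi m M : R) : R :=
  ov (frac lo) (hi - lo + frac lo) m M + ov (frac lo - 1) (hi - lo + frac lo - 1) m M.
Lemma lam_int_Gf A c d : lam_int A c d = Gf (a_lo A) (a_hi A) c d.
Proof. reflexivity. Qed.

Definition F3 (a b m M : R) : R := ov (a-1) (b-1) m M + ov a b m M + ov (a+1) (b+1) m M.

Lemma ov_nonneg a b m M : 0 <= ov a b m M.
Proof. unfold ov; apply Rmax_l. Qed.

Lemma ov_zero a b m M : Rmin b M - Rmax a m <= 0 -> ov a b m M = 0.
Proof. intros; unfold ov; apply Rmax_left; lra. Qed.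

Ltac mm := unfold ov, Rmax, Rmin in *; repeat match goal with
  | |- context [Rle_dec ?a ?b] => destruct (Rle_dec a b)
  | H: context [Rle_dec ?a ?b] |- _ => destruct (Rle_dec a b) end.

Lemma Gf_nonneg lo hi m M : 0 <= Gf lo hi m M.
Proof. unfold Gf. pose proof (ov_nonneg (frac lo) (hi - lo + frac lo) m M).
  pose proof (ov_nonneg (frac lo - 1) (hi - lo + frac lo - 1) m M). lra. Qed.

Lemma Gf_le lo len m M : 0 <= len <= 1 -> m <= M -> Gf lo (lo + len) m M <= M - m.
Proof.
  intros. unfold Gf. pose proof (frac_range lo).
  replace (lo + len - lo + frac lo) with (frac lo + len) by ring.
  set (f := frac lo) in *. clearbody f. mm; lra.
Qed.

Lemma Gf_full lo len : 0 <= len <= 1 -> Gf lo (lo + len) 0 1 = len.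
Proof.
  intros. unfold Gf. pose proof (frac_range lo).
  replace (lo + len - lo + frac lo) with (frac lo + len) by ring.
  set (f := frac lo) in *. clearbody f. mm; lra.
Qed.

Lemma Gf_F3 lo len m M (z : Z) : 0 <= len <= 1 -> 0 <= m -> M <= 1 ->
  -1 <= lo - IZR z < 1 -> Gf lo (lo + len) m M = F3 (lo - IZR z) (lo + len - IZR z) m M.
Proof.
  intros Hl Hm HM Hz. unfold Gf, F3.
  destruct (Rle_dec 0 (lo - IZR z)).
  - rewrite (frac_unique lo z (lo - IZR z)); [|lra|ring].
    rewrite (ov_zero (lo - IZR z + 1)); [|unfold Rmin, Rmax; mm; lra].
    replace (lo + len - lo + (lo - IZR z)) with (lo + len - IZR z) by ring. ring.
  - rewrite (frac_unique lo (z - 1) (lo - IZR z + 1)); [|lra|rewrite minus_IZR; simpl; ring].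
    rewrite (ov_zero (lo - IZR z - 1)); [|unfold Rmin, Rmax; mm; lra].
    replace (lo + len - lo + (lo - IZR z + 1)) with (lo + len - IZR z + 1) by ring.
    replace (lo - IZR z + 1 - 1) with (lo - IZR z) by ring.
    replace (lo + len - IZR z + 1 - 1) with (lo + len - IZR z) by ring. ring.
Qed.

Lemma ov_lip a b m M a' b' m' M' da db dm dM :
  Rabs (a - a') <= da -> Rabs (b - b') <= db -> Rabs (m - m') <= dm -> Rabs (M - M') <= dM ->
  Rabs (ov a b m M - ov a' b' m' M') <= da + db + dm + dM.
Proof.
  intros H1 H2 H3 H4; apply absle; apply absle in H1; apply absle in H2; apply absle in H3; apply absle in H4. mm; lra.
Qed.

Lemma Gf_contain lo len m M (k : Z) : 0 <= m -> m <= M -> M <= 1 -> 0 <= len <= 1 ->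
  lo <= m + IZR k -> M + IZR k <= lo + len -> Gf lo (lo + len) m M = M - m.
Proof.
  intros. unfold Gf. pose proof (frac_range lo). pose proof (frac_int lo).
  replace (lo + len - lo + frac lo) with (frac lo + len) by ring.
  assert (Hq1 : IZR (Int_part lo - k) < 2) by (rewrite minus_IZR; lra).
  assert (Hq2 : -2 < IZR (Int_part lo - k)) by (rewrite minus_IZR; lra).
  apply lt_IZR in Hq1; apply lt_IZR in Hq2.
  assert (Hq : (Int_part lo - k = -1 \/ Int_part lo - k = 0 \/ Int_part lo - k = 1)%Z) by lia.
  assert (E : IZR (Int_part lo) - IZR k = IZR (Int_part lo - k)) by (rewrite minus_IZR; ring).
  set (f := frac lo) in *. clearbody f.
  destruct Hq as [Hq|[Hq|Hq]]; rewrite Hq in E; simpl in E; mm; lra.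
Qed.

Lemma Gf_disj lo len m M (z : Z) : 0 <= m -> m <= M -> M <= 1 -> 0 <= len <= 1 ->
  -1 <= lo - IZR z < 1 ->
  (M < lo - IZR z - 1 \/ m > lo + len - IZR z - 1) ->
  (M < lo - IZR z \/ m > lo + len - IZR z) ->
  (M < lo - IZR z + 1 \/ m > lo + len - IZR z + 1) ->
  Gf lo (lo + len) m M = 0.
Proof.
  intros. rewrite (Gf_F3 lo len m M z); try lra. unfold F3.
  rewrite !ov_zero; [ring| | |]; unfold Rmin, Rmax; mm; lra.
Qed.

Lemma in_arc_closed_s lo len p (z : Z) : 0 < p < 1 -> 0 <= len <= 1 -> -1 <= lo - IZR z < 1 ->
  in_arc (Arc lo (lo + len) true true) p ->
  exists s : Z, (s = -1 \/ s = 0 \/ s = 1)%Z /\ lo - IZR z + IZR s <= p <= lo + len - IZR z + IZR s.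
Proof.
  intros Hp Hl Hz [k [H1 H2]]. simpl in H1, H2.
  exists (z - k)%Z. rewrite minus_IZR. split; [|lra].
  assert (Hq1 : IZR (z - k) < 2) by (rewrite minus_IZR; lra).
  assert (Hq2 : -2 < IZR (z - k)) by (rewrite minus_IZR; lra).
  apply lt_IZR in Hq1; apply lt_IZR in Hq2. lia.
Qed.

Lemma in_arc_int A p (k : Z) : in_arc A (p + IZR k) <-> in_arc A p.
Proof.
  split; intros [j Hj].
  - exists (k + j)%Z. rewrite plus_IZR. replace (p + (IZR k + IZR j)) with (p + IZR k + IZR j) by ring. auto.
  - exists (j - k)%Z. rewrite minus_IZR. replace (p + IZR k + (IZR j - IZR k)) with (p + IZR j) by ring. auto.
Qed.

Lemma dirac_frac p q A : frac p = frac q -> dirac p A = dirac q A.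
Proof.
  intros H. assert (E : p = q + IZR (Int_part p - Int_part q)).
  { rewrite minus_IZR. pose proof (frac_int p); pose proof (frac_int q). lra. }
  unfold dirac. rewrite E.
  destruct (excluded_middle_informative (in_arc A (q + IZR (Int_part p - Int_part q))));
  destruct (excluded_middle_informative (in_arc A q)); auto.
  - exfalso; apply n; apply in_arc_int in i; auto.
  - exfalso; apply n; apply in_arc_int; auto.
Qed.

Lemma in_arc_refl A y : in_arc A (1 - y) <-> in_arc (refl A) y.
Proof.
  destruct A as [lo hi lc rc]; unfold refl, in_arc; simpl.
  split; intros [k Hk]; exists (- k)%Z; rewrite opp_IZR;
  destruct lc, rc; simpl in *; lra.
Qed.

Lemma dirac_refl y A : dirac (1 - y) A = dirac y (refl A).
Proof.
  unfold dirac.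
  destruct (excluded_middle_informative (in_arc A (1 - y)));
  destruct (excluded_middle_informative (in_arc (refl A) y)); auto.
  - exfalso; apply n; apply in_arc_refl; auto.
  - exfalso; apply n; apply in_arc_refl; auto.
Qed.

Lemma dirac_01 p A : dirac p A = 0 \/ dirac p A = 1.
Proof. unfold dirac; destruct (excluded_middle_informative _); auto. Qed.

Lemma cv_inv (b : nat -> R) b0 : Un_cv b b0 -> b0 <> 0 -> Un_cv (fun j => / b j) (/ b0).
Proof.
  intros H Hb. pose proof (continuity_seq (/ id)%F b b0) as K.
  apply K; auto. apply continuity_pt_inv. exact (derivable_continuous_pt _ _ (derivable_pt_id b0)). exact Hb.
Qed.

Lemma cv_const c : Un_cv (fun _ => c) c.
Proof. intros e He; exists 0%nat; intros; unfold Rdist; rewrite Rminus_diag, Rabs_R0; lra. Qed.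

Lemma cv_abs0 (x : nat -> R) x0 : Un_cv x x0 -> Un_cv (fun j => Rabs (x j - x0)) 0.
Proof.
  intros H e He. destruct (H e He) as [N HN]. exists N; intros j Hj.
  specialize (HN j Hj). unfold Rdist in *. rewrite Rminus_0_r, Rabs_Rabsolu. auto.
Qed.

Lemma cv_dom (u v : nat -> R) l : (exists N, forall j, (j >= N)%nat -> Rabs (u j - l) <= v j) ->
  Un_cv v 0 -> Un_cv u l.
Proof.
  intros [N1 H1] H e He. destruct (H e He) as [N2 H2]. exists (max N1 N2); intros j Hj.
  specialize (H1 j ltac:(lia)); specialize (H2 j ltac:(lia)). unfold Rdist in *.
  rewrite Rminus_0_r in H2. pose proof (Rle_abs (v j)). lra.
Qed.

Lemma cv_ev (u v : nat -> R) l : (exists N, forall j, (j >= N)%nat -> u j = v j) -> Un_cv v l -> Un_cv u l.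
Proof.
  intros [N1 H1] H e He. destruct (H e He) as [N2 H2]. exists (max N1 N2); intros j Hj.
  rewrite H1 by lia. apply H2; lia.
Qed.

Lemma cv_ev_near (x : nat -> R) x0 d : Un_cv x x0 -> d > 0 -> exists N, forall j, (j >= N)%nat -> Rabs (x j - x0) < d.
Proof. intros H Hd. destruct (H d Hd) as [N HN]. exists N; intros; apply HN; auto. Qed.

Lemma cv_lin4 (a b c d : nat -> R) : Un_cv a 0 -> Un_cv b 0 -> Un_cv c 0 -> Un_cv d 0 ->
  forall K, Un_cv (fun j => K * (a j + b j + c j + d j)) 0.
Proof.
  intros. replace 0 with (K * (0 + 0 + 0 + 0)) by ring.
  apply CV_mult; [apply cv_const|]. repeat apply CV_plus; auto.
Qed.

Lemma Rmin_lip a b a' b' : Rabs (Rmin a b - Rmin a' b') <= Rabs (a - a') + Rabs (b - b').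
Proof. unfold Rmin, Rabs; destruct (Rle_dec a b), (Rle_dec a' b'); repeat destruct Rcase_abs; lra. Qed.
Lemma Rmax_lip a b a' b' : Rabs (Rmax a b - Rmax a' b') <= Rabs (a - a') + Rabs (b - b').
Proof. unfold Rmax, Rabs; destruct (Rle_dec a b), (Rle_dec a' b'); repeat destruct Rcase_abs; lra. Qed.

Lemma cv_Rmin (a b : nat -> R) a0 b0 : Un_cv a a0 -> Un_cv b b0 -> Un_cv (fun j => Rmin (a j) (b j)) (Rmin a0 b0).
Proof.
  intros. apply (cv_dom _ (fun j => Rabs (a j - a0) + Rabs (b j - b0))).
  exists 0%nat; intros; apply Rmin_lip. replace 0 with (0 + 0) by ring. apply CV_plus; apply cv_abs0; auto.
Qed.
Lemma cv_Rmax (a b : nat -> R) a0 b0 : Un_cv a a0 -> Un_cv b b0 -> Un_cv (fun j => Rmax (a j) (b j)) (Rmax a0 b0).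
Proof.
  intros. apply (cv_dom _ (fun j => Rabs (a j - a0) + Rabs (b j - b0))).
  exists 0%nat; intros; apply Rmax_lip. replace 0 with (0 + 0) by ring. apply CV_plus; apply cv_abs0; auto.
Qed.

Lemma Gf_cv (lo len m M : nat -> R) lo0 len0 m0 M0 :
  Un_cv lo lo0 -> Un_cv len len0 -> Un_cv m m0 -> Un_cv M M0 ->
  (forall j, 0 <= len j <= 1 /\ 0 <= m j /\ M j <= 1) -> 0 <= len0 <= 1 -> 0 <= m0 -> M0 <= 1 ->
  Un_cv (fun j => Gf (lo j) (lo j + len j) (m j) (M j)) (Gf lo0 (lo0 + len0) m0 M0).
Proof.
  intros Hlo Hlen Hm HM Hb Hl0 Hm0 HM0.
  set (z := Int_part (lo0 + /2)).
  assert (Hz : -1/2 <= lo0 - IZR z < 1/2).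
  { pose proof (frac_range (lo0 + /2)). unfold frac in H. fold z in H. lra. }
  apply (cv_dom _ (fun j => 3 * (Rabs (lo j - lo0) + (Rabs (lo j - lo0) + Rabs (len j - len0))
     + Rabs (m j - m0) + Rabs (M j - M0)))).
  - destruct (cv_ev_near lo lo0 (1/2) Hlo ltac:(lra)) as [N HN].
    exists N; intros j Hj. specialize (HN j Hj). apply abslt in HN.
    destruct (Hb j) as [Hb1 [Hb2 Hb3]].
    rewrite (Gf_F3 _ _ _ _ z) by lra. rewrite (Gf_F3 lo0 _ _ _ z) by lra.
    unfold F3.
    assert (Hlen' : Rabs (lo j + len j - IZR z - (lo0 + len0 - IZR z)) <= Rabs (lo j - lo0) + Rabs (len j - len0)).
    { replace (lo j + len j - IZR z - (lo0 + len0 - IZR z)) with ((lo j - lo0) + (len j - len0)) by ring.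
      apply Rabs_triang. }
    assert (Hlo' : forall c, Rabs (lo j - IZR z + c - (lo0 - IZR z + c)) <= Rabs (lo j - lo0)).
    { intros c; right; f_equal; ring. }
    assert (Hlen'' : forall c, Rabs (lo j + len j - IZR z + c - (lo0 + len0 - IZR z + c)) <= Rabs (lo j - lo0) + Rabs (len j - len0)).
    { intros c. replace (lo j + len j - IZR z + c - (lo0 + len0 - IZR z + c)) with (lo j + len j - IZR z - (lo0 + len0 - IZR z)) by ring. auto. }
    assert (R1 : Rabs (m j - m0) <= Rabs (m j - m0)) by lra.
    assert (R2 : Rabs (M j - M0) <= Rabs (M j - M0)) by lra.
    pose proof (ov_lip _ _ _ _ _ _ _ _ _ _ _ _ (Hlo' (-1)) (Hlen'' (-1)) R1 R2) as O1.
    pose proof (ov_lip _ _ _ _ _ _ _ _ _ _ _ _ (Hlo' 0) (Hlen'' 0) R1 R2) as O2.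
    pose proof (ov_lip _ _ _ _ _ _ _ _ _ _ _ _ (Hlo' 1) (Hlen'' 1) R1 R2) as O3.
    replace (lo j - IZR z + -1) with (lo j - IZR z - 1) in O1 by ring.
    replace (lo0 - IZR z + -1) with (lo0 - IZR z - 1) in O1 by ring.
    replace (lo j + len j - IZR z + -1) with (lo j + len j - IZR z - 1) in O1 by ring.
    replace (lo0 + len0 - IZR z + -1) with (lo0 + len0 - IZR z - 1) in O1 by ring.
    rewrite !Rplus_0_r in O2.
    apply absle in O1; apply absle in O2; apply absle in O3. apply absle. lra.
  - apply cv_lin4; try (apply cv_abs0; auto).
    replace 0 with (0 + 0) by ring. apply CV_plus; apply cv_abs0; auto.
Qed.




Definition PP (xb1 xb2 x1s : R) (psi phi : R -> R) : Prop :=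
  cont_on xb1 xb2 psi /\ cont_on xb1 xb2 phi /\
  (forall x, xb1 <= x <= xb2 -> 0 <= psi x <= 1) /\
  (forall x, xb1 <= x <= xb2 -> 0 <= phi x <= 1) /\
  psi xb1 = 0 /\ phi xb1 = 1 /\ psi xb2 = 1 /\ phi xb2 = 0 /\
  (forall x, xb1 <= x < x1s -> psi x < phi x) /\
  (forall x, x1s < x <= xb2 -> psi x > phi x) /\
  psi x1s = phi x1s /\ xb1 < x1s < xb2.

Definition clamp (a b t : R) : R := Rmax a (Rmin b t).

Definition W1 (xb1 xb2 x1s y1s : R) (psi phi : R -> R) (t : R) (A : arc) : R :=
  if Rin_open xb1 xb2 t then
    (if Req_b t x1s then dirac y1s A
     else lam_int A (Rmin (psi t) (phi t)) (Rmax (psi t) (phi t)) / Rabs (phi t - psi t))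
  else lam A.

Definition Phi (xb1 xb2 : R) (psi phi : R -> R) (t lo len : R) : R :=
  let c := clamp xb1 xb2 t in
  Gf lo (lo + len) (Rmin (psi c) (phi c)) (Rmax (psi c) (phi c)) /
   (Rmax (psi c) (phi c) - Rmin (psi c) (phi c)).

Lemma Rin_open_iff a b z : Rin_open a b z = true <-> a < z < b.
Proof. unfold Rin_open; destruct (Rlt_dec a z), (Rlt_dec z b); split; intros; try lra; try discriminate; auto. Qed.
Lemma Rin_open_false a b z : ~ (a < z < b) -> Rin_open a b z = false.
Proof. intros H. destruct (Rin_open a b z) eqn:E; auto. apply Rin_open_iff in E; tauto. Qed.
Lemma Req_b_true a b : a = b -> Req_b a b = true.
Proof. intros; unfold Req_b; destruct (Req_EM_T a b); auto; tauto. Qed.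
Lemma Req_b_false a b : a <> b -> Req_b a b = false.
Proof. intros; unfold Req_b; destruct (Req_EM_T a b); auto; tauto. Qed.

Lemma Rabs_maxmin a b : Rabs (b - a) = Rmax a b - Rmin a b.
Proof. unfold Rabs, Rmax, Rmin; destruct Rcase_abs, Rle_dec; lra. Qed.

Lemma clamp_in a b t : a <= b -> a <= clamp a b t <= b.
Proof. unfold clamp, Rmax, Rmin; intros; repeat destruct Rle_dec; lra. Qed.
Lemma clamp_id a b t : a <= t <= b -> clamp a b t = t.
Proof. unfold clamp, Rmax, Rmin; intros; repeat destruct Rle_dec; lra. Qed.

Lemma PP_gap xb1 xb2 x1s psi phi t : PP xb1 xb2 x1s psi phi -> xb1 <= t <= xb2 -> t <> x1s ->
  Rmin (psi t) (phi t) < Rmax (psi t) (phi t).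
Proof.
  intros (_&_&_&_&_&_&_&_&Hlt&Hgt&_) Ht Hne.
  destruct (Rlt_dec t x1s).
  - specialize (Hlt t ltac:(lra)). unfold Rmin, Rmax; destruct Rle_dec; lra.
  - specialize (Hgt t ltac:(lra)). unfold Rmin, Rmax; destruct Rle_dec; lra.
Qed.

Lemma PP_range xb1 xb2 x1s psi phi t : PP xb1 xb2 x1s psi phi -> xb1 <= t <= xb2 ->
  0 <= Rmin (psi t) (phi t) /\ Rmin (psi t) (phi t) <= Rmax (psi t) (phi t) /\ Rmax (psi t) (phi t) <= 1.
Proof.
  intros (_&_&Hp&Hf&_) Ht. specialize (Hp t Ht); specialize (Hf t Ht).
  unfold Rmin, Rmax; destruct Rle_dec; lra.
Qed.

Lemma W1_Phi xb1 xb2 x1s y1s psi phi t lo len lc rc : PP xb1 xb2 x1s psi phi -> t <> x1s -> 0 <= len <= 1 ->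
  W1 xb1 xb2 x1s y1s psi phi t (Arc lo (lo + len) lc rc) = Phi xb1 xb2 psi phi t lo len.
Proof.
  intros HP Hne Hl. pose proof HP as (_&_&_&_&H1&H2&H3&H4&_&_&_&Hx).
  unfold W1, Phi.
  destruct (Rlt_dec xb1 t); [destruct (Rlt_dec t xb2)|].
  - rewrite (proj2 (Rin_open_iff _ _ _)) by lra. rewrite Req_b_false by auto.
    rewrite clamp_id by lra. rewrite lam_int_Gf. simpl. rewrite Rabs_maxmin. reflexivity.
  - rewrite Rin_open_false by lra. unfold clamp.
    rewrite (Rmin_left xb2 t) by lra. rewrite Rmax_right by lra.
    rewrite H3, H4. rewrite Rmin_right, Rmax_left by lra. rewrite Gf_full by lra.
    unfold lam; simpl. field_simplify; lra.
  - rewrite Rin_open_false by lra. unfold clamp.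
    rewrite (Rmin_right xb2 t) by lra. rewrite Rmax_left by lra.
    rewrite H1, H2. rewrite Rmin_left, Rmax_right by lra. rewrite Gf_full by lra.
    unfold lam; simpl. field_simplify; lra.
Qed.

Lemma cont_on_seq a b f (u : nat -> R) u0 : cont_on a b f -> (forall j, a <= u j <= b) -> a <= u0 <= b ->
  Un_cv u u0 -> Un_cv (fun j => f (u j)) (f u0).
Proof.
  intros Hc Hu Hu0 Hcv e He. destruct (Hc u0 Hu0 e He) as [d [Hd Hd']].
  destruct (Hcv d Hd) as [N HN]. exists N; intros j Hj. unfold Rdist.
  apply Hd'; auto. apply HN; auto.
Qed.

Lemma cv_clamp a b (t : nat -> R) t0 : Un_cv t t0 -> Un_cv (fun j => clamp a b (t j)) (clamp a b t0).
Proof. intros. unfold clamp. apply cv_Rmax; [apply cv_const|]. apply cv_Rmin; [apply cv_const|]; auto. Qed.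

Lemma cv_sep (X Y : nat -> R) x y : Un_cv X x -> Un_cv Y y -> x < y -> exists N, forall j, (j >= N)%nat -> X j < Y j.
Proof.
  intros HX HY H. destruct (cv_ev_near X x ((y - x)/2) HX ltac:(lra)) as [N1 H1].
  destruct (cv_ev_near Y y ((y - x)/2) HY ltac:(lra)) as [N2 H2].
  exists (max N1 N2); intros j Hj. specialize (H1 j ltac:(lia)); specialize (H2 j ltac:(lia)).
  apply abslt in H1; apply abslt in H2. lra.
Qed.

Lemma W1_in xb1 xb2 x1s y1s psi phi t A : xb1 < t < xb2 ->
  W1 xb1 xb2 x1s y1s psi phi t A =
  if Req_b t x1s then dirac y1s A
  else Gf (a_lo A) (a_hi A) (Rmin (psi t) (phi t)) (Rmax (psi t) (phi t)) / (Rmax (psi t) (phi t) - Rmin (psi t) (phi t)).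
Proof.
  intros. unfold W1. rewrite (proj2 (Rin_open_iff _ _ _)) by lra. rewrite Rabs_maxmin. reflexivity.
Qed.

Lemma W1_bounds xb1 xb2 x1s y1s psi phi t lo len lc rc : PP xb1 xb2 x1s psi phi -> 0 <= len <= 1 ->
  0 <= W1 xb1 xb2 x1s y1s psi phi t (Arc lo (lo + len) lc rc) <= 1.
Proof.
  intros HP Hl. destruct (Req_dec t x1s) as [E|E].
  - pose proof HP as (_&_&_&_&_&_&_&_&_&_&_&Hx). subst. rewrite W1_in by lra.
    rewrite Req_b_true by auto. destruct (dirac_01 y1s (Arc lo (lo + len) lc rc)) as [D|D]; rewrite D; lra.
  - rewrite W1_Phi by auto. unfold Phi. cbv zeta.
    pose proof HP as (_&_&_&_&_&_&_&_&_&_&_&Hx).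
    set (c := clamp xb1 xb2 t).
    assert (Hc : xb1 <= c <= xb2) by (apply clamp_in; lra).
    destruct (Req_dec c x1s) as [Ec|Ec].
    + (* c = x1s only if t = x1s *)
      exfalso. unfold c, clamp, Rmax, Rmin in Ec. repeat destruct Rle_dec in Ec; lra.
    + pose proof (PP_gap _ _ _ _ _ c HP Hc Ec). pose proof (PP_range _ _ _ _ _ c HP Hc).
      pose proof (Gf_le lo len (Rmin (psi c) (phi c)) (Rmax (psi c) (phi c)) Hl ltac:(lra)).
      pose proof (Gf_nonneg lo (lo + len) (Rmin (psi c) (phi c)) (Rmax (psi c) (phi c))).
      split.
      * apply Rmult_le_pos; auto. left; apply Rinv_0_lt_compat; lra.
      * apply (Rmult_le_reg_r (Rmax (psi c) (phi c) - Rmin (psi c) (phi c))); [lra|].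
        unfold Rdiv; rewrite Rmult_assoc, Rinv_l by lra. lra.
Qed.

Lemma not_in_closed_s lo len p (z s : Z) : ~ in_arc (Arc lo (lo + len) true true) p ->
  p < lo - IZR z + IZR s \/ p > lo + len - IZR z + IZR s.
Proof.
  intros H. destruct (Rlt_dec p (lo - IZR z + IZR s)); [left; auto|].
  destruct (Rlt_dec (lo + len - IZR z + IZR s) p); [right; auto|].
  exfalso; apply H. exists (z - s)%Z. simpl. rewrite minus_IZR. lra.
Qed.

Lemma core1 xb1 xb2 x1s y1s psi phi (t lo len : nat -> R) t0 lo0 len0 :
  PP xb1 xb2 x1s psi phi -> frac (psi x1s) = frac y1s -> 0 < psi x1s < 1 ->
  xb1 <= t0 <= xb2 -> Un_cv t t0 -> Un_cv lo lo0 -> Un_cv len len0 ->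
  (forall j, 0 <= len j <= 1) -> 0 <= len0 <= 1 ->
  forall eps, eps > 0 -> exists N, forall j, (j >= N)%nat ->
    W1 xb1 xb2 x1s y1s psi phi t0 (Arc lo0 (lo0 + len0) false false) - eps <=
    W1 xb1 xb2 x1s y1s psi phi (t j) (Arc (lo j) (lo j + len j) true true) <=
    W1 xb1 xb2 x1s y1s psi phi t0 (Arc lo0 (lo0 + len0) true true) + eps.
Proof.
  intros HP Hfr Hp01 Ht0 Ht Hlo Hlen Hlb Hl0 eps Heps.
  pose proof HP as (Hpc&Hfc&Hpr&Hfr'&_&_&_&_&Hlt&Hgt&Heq&Hx).
  set (c := fun j => clamp xb1 xb2 (t j)).
  set (m := fun j => Rmin (psi (c j)) (phi (c j))).
  set (M := fun j => Rmax (psi (c j)) (phi (c j))).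
  assert (Hcin : forall j, xb1 <= c j <= xb2) by (intros; apply clamp_in; lra).
  assert (Hc : Un_cv c t0).
  { rewrite <- (clamp_id xb1 xb2 t0) by lra. apply cv_clamp; auto. }
  assert (Hm : Un_cv m (Rmin (psi t0) (phi t0))).
  { apply cv_Rmin; apply (cont_on_seq xb1 xb2); auto. }
  assert (HM : Un_cv M (Rmax (psi t0) (phi t0))).
  { apply cv_Rmax; apply (cont_on_seq xb1 xb2); auto. }
  assert (Hmr : forall j, 0 <= m j /\ m j <= M j /\ M j <= 1) by (intros; apply (PP_range xb1 xb2 x1s); auto).
  destruct (Req_dec t0 x1s) as [E0|E0].
  2:{
    assert (HG : Un_cv (fun j => Gf (lo j) (lo j + len j) (m j) (M j) * / (M j - m j))
                  (Gf lo0 (lo0 + len0) (Rmin (psi t0) (phi t0)) (Rmax (psi t0) (phi t0)) *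
                   / (Rmax (psi t0) (phi t0) - Rmin (psi t0) (phi t0)))).
    { apply CV_mult.
      - pose proof (PP_range _ _ _ _ _ t0 HP Ht0).
        apply Gf_cv; auto; try lra. intros j; specialize (Hmr j); specialize (Hlb j); lra.
      - apply cv_inv. apply CV_minus; auto. pose proof (PP_gap _ _ _ _ _ t0 HP Ht0 E0); lra. }
    destruct (HG eps Heps) as [N1 HN1].
    destruct (cv_ev_near t t0 (Rabs (t0 - x1s)) Ht) as [N2 HN2].
    { apply Rabs_pos_lt; lra. }
    exists (max N1 N2); intros j Hj.
    specialize (HN1 j ltac:(lia)); specialize (HN2 j ltac:(lia)).
    assert (Htj : t j <> x1s). { intros E; rewrite E in HN2. rewrite <- Rabs_Ropp in HN2.
      replace (- (x1s - t0)) with (t0 - x1s) in HN2 by ring. lra. }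
    rewrite !W1_Phi by auto.
    unfold Phi. cbv zeta. rewrite (clamp_id xb1 xb2 t0) by lra.
    fold (c j). fold (m j). fold (M j).
    unfold Rdist in HN1. apply abslt in HN1. unfold Rdiv. split; lra. }
  subst t0.
  set (p := psi x1s).
  assert (Hpp : phi x1s = p) by (unfold p; auto).
  assert (Hpm : Rmin p p = p) by (unfold Rmin; destruct Rle_dec; auto).
  assert (HpM : Rmax p p = p) by (unfold Rmax; destruct Rle_dec; auto).
  rewrite Hpp in Hm, HM. fold p in Hm, HM. rewrite Hpm in Hm. rewrite HpM in HM.
  assert (Hdir : forall A, dirac y1s A = dirac p A) by (intros; apply dirac_frac; auto).
  assert (HW0 : forall A, W1 xb1 xb2 x1s y1s psi phi x1s A = dirac p A).
  { intros A. rewrite W1_in by lra. rewrite Req_b_true by auto. auto. }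
  destruct (cv_ev_near t x1s (Rmin (x1s - xb1) (xb2 - x1s)) Ht) as [Nin HNin].
  { unfold Rmin; destruct Rle_dec; lra. }
  assert (Hin : forall j, (j >= Nin)%nat -> xb1 < t j < xb2 /\ c j = t j).
  { intros j Hj. specialize (HNin j Hj). apply abslt in HNin.
    assert (Rmin (x1s - xb1) (xb2 - x1s) <= x1s - xb1) by apply Rmin_l.
    assert (Rmin (x1s - xb1) (xb2 - x1s) <= xb2 - x1s) by apply Rmin_r.
    split; [lra|]. unfold c; apply clamp_id; lra. }
  assert (HWj : forall j, (j >= Nin)%nat -> forall A,
    W1 xb1 xb2 x1s y1s psi phi (t j) A =
      if Req_b (t j) x1s then dirac p A else Gf (a_lo A) (a_hi A) (m j) (M j) / (M j - m j)).
  { intros j Hj A. destruct (Hin j Hj) as [H1 H2]. rewrite W1_in by lra.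
    rewrite Hdir. unfold m, M. rewrite H2. reflexivity. }
  assert (Hat : forall j, t j = x1s -> m j = p /\ M j = p).
  { intros j E. unfold m, M, c. rewrite E. rewrite clamp_id by lra. rewrite Hpp. fold p; auto. }
  assert (Hgap : forall j, (j >= Nin)%nat -> t j <> x1s -> m j < M j).
  { intros j Hj E. destruct (Hin j Hj) as [H1 H2]. unfold m, M. rewrite H2.
    apply (PP_gap xb1 xb2 x1s); auto; lra. }
  assert (Hlh : Un_cv (fun j => lo j + len j) (lo0 + len0)) by (apply CV_plus; auto).
  assert (Hup : exists N, forall j, (j >= N)%nat ->
     W1 xb1 xb2 x1s y1s psi phi (t j) (Arc (lo j) (lo j + len j) true true) <=
     W1 xb1 xb2 x1s y1s psi phi x1s (Arc lo0 (lo0 + len0) true true) + eps).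
  { rewrite HW0. destruct (classic (in_arc (Arc lo0 (lo0 + len0) true true) p)) as [Hi|Hi].
    - exists 0%nat; intros j _. unfold dirac at 1.
      destruct (excluded_middle_informative _); [|tauto].
      pose proof (W1_bounds xb1 xb2 x1s y1s psi phi (t j) (lo j) (len j) true true HP (Hlb j)). lra.
    - set (z := Int_part (lo0 + /2)).
      assert (Hz : -1/2 <= lo0 - IZR z < 1/2).
      { pose proof (frac_range (lo0 + /2)). unfold frac in H. fold z in H. lra. }
      assert (Hs : forall s : Z, exists N, forall j, (j >= N)%nat ->
                M j < lo j - IZR z + IZR s \/ m j > lo j + len j - IZR z + IZR s).
      { intros s. destruct (not_in_closed_s lo0 len0 p z s Hi) as [H|H].
        - destruct (cv_sep M (fun j => lo j - IZR z + IZR s) p (lo0 - IZR z + IZR s)) as [N HN]; auto.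
          { apply CV_plus; [apply CV_minus|]; auto; apply cv_const. }
          exists N; intros j Hj; left; apply HN; auto.
        - destruct (cv_sep (fun j => lo j + len j - IZR z + IZR s) m (lo0 + len0 - IZR z + IZR s) p) as [N HN]; auto.
          { apply CV_plus; [apply CV_minus|]; auto; apply cv_const. }
          exists N; intros j Hj; right; apply HN; auto. }
      destruct (Hs (-1)%Z) as [Na Ha]. destruct (Hs 0%Z) as [Nb Hb]. destruct (Hs 1%Z) as [Nc Hc'].
      destruct (cv_ev_near lo lo0 (1/2) Hlo ltac:(lra)) as [Nd Hd].
      exists (max Nin (max Na (max Nb (max Nc Nd)))); intros j Hj.
      specialize (Ha j ltac:(lia)); specialize (Hb j ltac:(lia)); specialize (Hc' j ltac:(lia)).
      specialize (Hd j ltac:(lia)). apply abslt in Hd.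
      simpl IZR in Ha, Hb, Hc'.
      assert (D0 : dirac p (Arc lo0 (lo0 + len0) true true) = 0).
      { unfold dirac; destruct (excluded_middle_informative _); tauto. }
      rewrite D0.
      rewrite (HWj j ltac:(lia)). simpl a_lo; simpl a_hi.
      destruct (Req_dec (t j) x1s) as [E|E].
      + rewrite Req_b_true by auto. unfold dirac.
        destruct (excluded_middle_informative _) as [Hia|]; [|lra].
        destruct (Hat j E) as [E1 E2].
        destruct (in_arc_closed_s (lo j) (len j) p z Hp01 (Hlb j) ltac:(lra) Hia) as [s [Hs3 Hs4]].
        exfalso. destruct Hs3 as [-> | [-> | ->]]; simpl IZR in Hs4; lra.
      + rewrite Req_b_false by auto. destruct (Hmr j) as (?&?&?).
        rewrite (Gf_disj (lo j) (len j) (m j) (M j) z); try lra; auto. }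
  assert (Hlow : exists N, forall j, (j >= N)%nat ->
     W1 xb1 xb2 x1s y1s psi phi x1s (Arc lo0 (lo0 + len0) false false) - eps <=
     W1 xb1 xb2 x1s y1s psi phi (t j) (Arc (lo j) (lo j + len j) true true)).
  { rewrite HW0. destruct (classic (in_arc (Arc lo0 (lo0 + len0) false false) p)) as [Hi|Hi].
    - destruct Hi as [k [Hk1 Hk2]]. simpl in Hk1, Hk2.
      destruct (cv_sep lo (fun j => m j + IZR k) lo0 (p + IZR k)) as [Na Ha]; auto.
      { apply CV_plus; auto; apply cv_const. }
      destruct (cv_sep (fun j => M j + IZR k) (fun j => lo j + len j) (p + IZR k) (lo0 + len0)) as [Nb Hb]; auto.
      { apply CV_plus; auto; apply cv_const. }
      exists (max Nin (max Na Nb)); intros j Hj.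
      specialize (Ha j ltac:(lia)); specialize (Hb j ltac:(lia)).
      assert (dirac p (Arc lo0 (lo0 + len0) false false) = 1).
      { unfold dirac; destruct (excluded_middle_informative _) as [|n]; auto.
        exfalso; apply n; exists k; simpl; lra. }
      rewrite H. rewrite (HWj j ltac:(lia)). simpl a_lo; simpl a_hi.
      destruct (Req_dec (t j) x1s) as [E|E].
      + rewrite Req_b_true by auto. destruct (Hat j E) as [E1 E2].
        unfold dirac; destruct (excluded_middle_informative _) as [|n]; [lra|].
        exfalso; apply n; exists k; simpl; lra.
      + rewrite Req_b_false by auto. destruct (Hmr j) as (?&?&?).
        rewrite (Gf_contain (lo j) (len j) (m j) (M j) k); try lra; auto.
        specialize (Hgap j ltac:(lia) E). unfold Rdiv; rewrite Rinv_r by lra. lra.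
    - assert (dirac p (Arc lo0 (lo0 + len0) false false) = 0).
      { unfold dirac; destruct (excluded_middle_informative _); tauto. }
      rewrite H. exists 0%nat; intros j _.
      pose proof (W1_bounds xb1 xb2 x1s y1s psi phi (t j) (lo j) (len j) true true HP (Hlb j)). lra. }
  destruct Hup as [N1 H1]; destruct Hlow as [N2 H2].
  exists (max N1 N2); intros j Hj. split; [apply H2|apply H1]; lia.
Qed.


Lemma mu0_reg1 xb1 xb2 x1s y1s psi phi x A : ~ (xb1 + 1/2 < frac x < xb2 + 1/2) ->
  mu0 xb1 xb2 x1s y1s psi phi x A = W1 xb1 xb2 x1s y1s psi phi (frac x) A.
Proof.
  intros H. unfold mu0, W1. cbv zeta.
  destruct (Rin_open xb1 xb2 (frac x)); auto. rewrite Rin_open_false by auto. auto.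
Qed.

Lemma mu0_reg2 xb1 xb2 x1s y1s psi phi x A : ~ (xb1 < frac x < xb2) ->
  mu0 xb1 xb2 x1s y1s psi phi x A = W1 xb1 xb2 x1s y1s psi phi (frac x - 1/2) (refl A).
Proof.
  intros H. unfold mu0, W1. cbv zeta. rewrite Rin_open_false by auto.
  destruct (Rin_open (xb1 + 1/2) (xb2 + 1/2) (frac x)) eqn:E.
  - apply Rin_open_iff in E. rewrite (proj2 (Rin_open_iff xb1 xb2 (frac x - 1/2))) by lra.
    destruct (Req_b (frac x - 1 / 2) x1s); auto. apply dirac_refl.
  - rewrite Rin_open_false.
    + unfold lam, refl; simpl; ring.
    + intros H'. assert (xb1 + 1/2 < frac x < xb2 + 1/2) by lra. apply Rin_open_iff in H0. congruence.
Qed.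

Lemma mu0_out xb1 xb2 x1s y1s psi phi x A : ~ (xb1 < frac x < xb2) -> ~ (xb1 + 1/2 < frac x < xb2 + 1/2) ->
  mu0 xb1 xb2 x1s y1s psi phi x A = lam A.
Proof. intros. unfold mu0. cbv zeta. rewrite !Rin_open_false by auto. auto. Qed.

Lemma frac_three w : -1 <= w < 2 -> frac w = w + 1 \/ frac w = w \/ frac w = w - 1.
Proof.
  intros H. destruct (Rlt_dec w 0).
  - left. apply (frac_unique w (-1)%Z); [lra| simpl; ring].
  - destruct (Rlt_dec w 1).
    + right; left. apply frac_id; lra.
    + right; right. apply (frac_unique w 1%Z); [lra| simpl; ring].
Qed.

Definition Tcv (X : nat -> R) (X0 : R) : Prop :=
  forall d, d > 0 -> exists N, forall j, (j >= N)%nat -> exists k : Z, Rabs (X j - X0 - IZR k) < d.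

Lemma frac_near X X0 (k : Z) d : Rabs (X - X0 - IZR k) < d -> d <= 1 ->
  exists e, Rabs e < d /\ (frac X = frac X0 + e + 1 \/ frac X = frac X0 + e \/ frac X = frac X0 + e - 1).
Proof.
  intros H Hd. exists (X - X0 - IZR k). split; auto. apply abslt in H.
  assert (E : X = frac X0 + (X - X0 - IZR k) + IZR (Int_part X0 + k)).
  { rewrite plus_IZR. unfold frac. ring. }
  set (e := X - X0 - IZR k) in *. clearbody e. rewrite E. rewrite frac_shift. pose proof (frac_range X0). apply frac_three. lra.
Qed.

Lemma frac_cv X X0 : Tcv X X0 -> 0 < frac X0 < 1 -> Un_cv (fun j => frac (X j)) (frac X0).
Proof.
  intros HT Hf e He.
  set (d := Rmin e (Rmin (frac X0) (1 - frac X0))).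
  assert (Hd : 0 < d /\ d <= e /\ d <= frac X0 /\ d <= 1 - frac X0)
    by (unfold d, Rmin; repeat destruct Rle_dec; lra).
  destruct (HT d ltac:(lra)) as [N HN]. exists N; intros j Hj.
  destruct (HN j Hj) as [k Hk]. destruct (frac_near _ _ _ _ Hk ltac:(lra)) as [e' [He' Hfr]].
  apply abslt in He'. pose proof (frac_range (X j)). unfold Rdist. apply abslt.
  destruct Hfr as [F|[F|F]]; rewrite F in *; lra.
Qed.

Lemma W1_open xb1 xb2 x1s y1s psi phi t lo len lc rc : PP xb1 xb2 x1s psi phi -> 0 <= len <= 1 ->
  (t = x1s -> (lc = true -> forall k : Z, y1s + IZR k <> lo) /\ (rc = true -> forall k : Z, y1s + IZR k <> lo + len)) ->
  W1 xb1 xb2 x1s y1s psi phi t (Arc lo (lo + len) lc rc) = W1 xb1 xb2 x1s y1s psi phi t (Arc lo (lo + len) false false).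
Proof.
  intros HP Hl Hb. destruct (Req_dec t x1s) as [E|E].
  - pose proof HP as (_&_&_&_&_&_&_&_&_&_&_&Hx). destruct (Hb E) as [B1 B2]. subst t.
    rewrite !W1_in by lra. rewrite Req_b_true by auto.
    unfold dirac. destruct (excluded_middle_informative (in_arc (Arc lo (lo + len) lc rc) y1s)) as [i|n];
    destruct (excluded_middle_informative (in_arc (Arc lo (lo + len) false false) y1s)) as [i'|n']; auto.
    + exfalso; apply n'. destruct i as [k [K1 K2]]. exists k. simpl in *. split.
      * destruct lc; auto. assert (y1s + IZR k <> lo) by (apply B1; auto). lra.
      * destruct rc; auto. assert (y1s + IZR k <> lo + len) by (apply B2; auto). lra.
    + exfalso; apply n. destruct i' as [k [K1 K2]]. exists k. simpl in *.
      split; [destruct lc|destruct rc]; lra.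
  - rewrite !W1_Phi by auto. reflexivity.
Qed.

Lemma mu0_semi xb1 xb2 x1s y1s psi phi (X lo len : nat -> R) X0 lo0 len0 :
  PP xb1 xb2 x1s psi phi -> frac (psi x1s) = frac y1s -> 0 < psi x1s < 1 ->
  0 < xb1 -> xb2 < 1/2 ->
  Tcv X X0 -> Un_cv lo lo0 -> Un_cv len len0 ->
  (forall j, 0 <= len j <= 1) -> 0 <= len0 <= 1 ->
  (frac X0 = x1s -> forall k : Z, y1s + IZR k <> lo0) ->
  (frac X0 = x1s + 1/2 -> forall k : Z, 1 - y1s + IZR k <> lo0) ->
  forall eps, eps > 0 -> exists N, forall j, (j >= N)%nat ->
    mu0 xb1 xb2 x1s y1s psi phi X0 (Arc lo0 (lo0 + len0) true false) - eps <=
    mu0 xb1 xb2 x1s y1s psi phi (X j) (Arc (lo j) (lo j + len j) true true) <=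
    mu0 xb1 xb2 x1s y1s psi phi X0 (Arc lo0 (lo0 + len0) true true) + eps.
Proof.
  intros HP Hfr Hp01 Hb0 Hb12 HT Hlo Hlen Hlb Hl0 BC1 BC2 eps Heps.
  pose proof HP as (_&_&_&_&_&_&_&_&_&_&_&Hx).
  pose proof (frac_range X0) as Hf0.
  assert (Hout : forall d, d > 0 -> d <= 1 -> (forall g e, Rabs e < d -> 0 <= g < 1 ->
     (g = frac X0 + e + 1 \/ g = frac X0 + e \/ g = frac X0 + e - 1) ->
     ~ (xb1 < g < xb2) /\ ~ (xb1 + 1/2 < g < xb2 + 1/2)) ->
    exists N, forall j, (j >= N)%nat ->
    mu0 xb1 xb2 x1s y1s psi phi X0 (Arc lo0 (lo0 + len0) true false) - eps <=
    mu0 xb1 xb2 x1s y1s psi phi (X j) (Arc (lo j) (lo j + len j) true true) <=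
    mu0 xb1 xb2 x1s y1s psi phi X0 (Arc lo0 (lo0 + len0) true true) + eps).
  { intros d Hd Hd1 Hg.
    destruct (Hg (frac X0) 0) as [G1 G2]; [rewrite Rabs_R0; lra|lra|right; left; ring|].
    destruct (HT d Hd) as [N1 HN1]. destruct (cv_ev_near _ _ eps Hlen Heps) as [N2 HN2].
    exists (max N1 N2); intros j Hj. destruct (HN1 j ltac:(lia)) as [k Hk].
    specialize (HN2 j ltac:(lia)). apply abslt in HN2.
    destruct (frac_near _ _ _ _ Hk Hd1) as [e [He Hfe]].
    destruct (Hg (frac (X j)) e He (frac_range _) Hfe) as [G3 G4].
    rewrite !mu0_out by auto. unfold lam; simpl. lra. }
  destruct (Rle_dec xb1 (frac X0)) as [r1|r1]; [destruct (Rle_dec (frac X0) xb2) as [r2|r2]|].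
  -
    assert (Ht : Un_cv (fun j => frac (X j)) (frac X0)) by (apply frac_cv; auto; lra).
    destruct (core1 xb1 xb2 x1s y1s psi phi (fun j => frac (X j)) lo len (frac X0) lo0 len0
       HP Hfr Hp01 ltac:(lra) Ht Hlo Hlen Hlb Hl0 eps Heps) as [N1 H1].
    destruct (cv_ev_near _ _ (xb1 + 1/2 - xb2) Ht ltac:(lra)) as [N2 H2].
    exists (max N1 N2); intros j Hj. specialize (H1 j ltac:(lia)); specialize (H2 j ltac:(lia)).
    apply abslt in H2.
    rewrite !mu0_reg1 by lra.
    rewrite (W1_open _ _ _ _ _ _ (frac X0) lo0 len0 true false); auto.
    intros E; split; [intros _; apply BC1; auto | discriminate].
  - destruct (Rle_dec (xb1 + 1/2) (frac X0)) as [r3|r3]; [destruct (Rle_dec (frac X0) (xb2 + 1/2)) as [r4|r4]|].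
    +
      assert (Ht : Un_cv (fun j => frac (X j)) (frac X0)) by (apply frac_cv; auto; lra).
      assert (Ht' : Un_cv (fun j => frac (X j) - 1/2) (frac X0 - 1/2)) by (apply CV_minus; auto; apply cv_const).
      assert (Hlo' : Un_cv (fun j => 1 - lo j - len j) (1 - lo0 - len0)).
      { apply CV_minus; auto. apply CV_minus; auto. apply cv_const. }
      destruct (core1 xb1 xb2 x1s y1s psi phi (fun j => frac (X j) - 1/2) (fun j => 1 - lo j - len j) len
         (frac X0 - 1/2) (1 - lo0 - len0) len0
         HP Hfr Hp01 ltac:(lra) Ht' Hlo' Hlen Hlb Hl0 eps Heps) as [N1 H1].
      destruct (cv_ev_near _ _ (frac X0 - xb2) Ht ltac:(lra)) as [N2 H2].
      exists (max N1 N2); intros j Hj. specialize (H1 j ltac:(lia)); specialize (H2 j ltac:(lia)).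
      apply abslt in H2.
      rewrite !mu0_reg2 by lra.
      assert (R1 : forall a b lc rc, refl (Arc a (a + b) lc rc) = Arc (1 - a - b) (1 - a - b + b) rc lc).
      { intros; unfold refl; simpl; f_equal; ring. }
      rewrite !R1.
      rewrite (W1_open _ _ _ _ _ _ (frac X0 - 1/2) (1 - lo0 - len0) len0 false true); auto.
      intros E; split; [discriminate|]. intros _ k Hk. apply (BC2 ltac:(lra) (- k)%Z).
      rewrite opp_IZR. lra.
    + apply (Hout (Rmin (frac X0 - xb2 - 1/2) xb1)).
      * unfold Rmin; destruct Rle_dec; lra.
      * unfold Rmin; destruct Rle_dec; lra.
      * intros g e He Hg Hge. apply abslt in He.
        assert (Rmin (frac X0 - xb2 - 1/2) xb1 <= frac X0 - xb2 - 1/2) by apply Rmin_l.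
        assert (Rmin (frac X0 - xb2 - 1/2) xb1 <= xb1) by apply Rmin_r.
        destruct Hge as [ -> | [ -> | -> ] ]; split; lra.
    + apply (Hout (Rmin (frac X0 - xb2) (xb1 + 1/2 - frac X0))).
      * unfold Rmin; destruct Rle_dec; lra.
      * unfold Rmin; destruct Rle_dec; lra.
      * intros g e He Hg Hge. apply abslt in He.
        assert (Rmin (frac X0 - xb2) (xb1 + 1/2 - frac X0) <= frac X0 - xb2) by apply Rmin_l.
        assert (Rmin (frac X0 - xb2) (xb1 + 1/2 - frac X0) <= xb1 + 1/2 - frac X0) by apply Rmin_r.
        destruct Hge as [ -> | [ -> | -> ] ]; split; lra.
  - apply (Hout (Rmin (xb1 - frac X0) (1/2 - xb2))).
    * unfold Rmin; destruct Rle_dec; lra.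
    * unfold Rmin; destruct Rle_dec; lra.
    * intros g e He Hg Hge. apply abslt in He.
      assert (Rmin (xb1 - frac X0) (1/2 - xb2) <= xb1 - frac X0) by apply Rmin_l.
      assert (Rmin (xb1 - frac X0) (1/2 - xb2) <= 1/2 - xb2) by apply Rmin_r.
      destruct Hge as [ -> | [ -> | -> ] ]; split; lra.
Qed.


Lemma Int_part_unique w (k : Z) : IZR k <= w < IZR k + 1 -> Int_part w = k.
Proof.
  intros H. assert (F : frac w = w - IZR k) by (apply (frac_unique w k); [lra|ring]).
  unfold frac in F. apply eq_IZR. lra.
Qed.

Lemma r_int (r : R -> R) : (forall x, r (x + 1) = r x) -> forall x (k : Z), r (x + IZR k) = r x.
Proof.
  intros Hp.
  assert (Hn : forall n x, r (x + INR n) = r x).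
  { induction n; intros x. simpl; rewrite Rplus_0_r; auto.
    rewrite S_INR. replace (x + (INR n + 1)) with (x + INR n + 1) by ring. rewrite Hp; auto. }
  intros x k. destruct k as [|p|p].
  - simpl; rewrite Rplus_0_r; auto.
  - rewrite <- Znat.positive_nat_Z, <- INR_IZR_INZ. auto.
  - replace (IZR (Z.neg p)) with (- INR (Pos.to_nat p)).
    + rewrite <- (Hn (Pos.to_nat p) (x + - INR (Pos.to_nat p))). f_equal; ring.
    + rewrite INR_IZR_INZ, Znat.positive_nat_Z. reflexivity.
Qed.

Lemma iterS_fst (al : R) (r : R -> R) n x y : fst (Nat.iter n (S_map al r) (x, y)) = x + INR n * al.
Proof.
  induction n; simpl. ring. rewrite IHn. destruct n; simpl; ring.
Qed.

Lemma sigma_S (al : R) (r : R -> R) n x y : Defs.sigma al r (S n) x y = Defs.sigma al r n x y + r (x + INR n * al).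
Proof.
  unfold Defs.sigma. simpl Nat.iter at 1. unfold S_map at 1. simpl snd. rewrite iterS_fst. reflexivity.
Qed.

Lemma iterS_pair (al : R) (r : R -> R) n x y : Nat.iter n (S_map al r) (x, y) = (x + INR n * al, Defs.sigma al r n x y).
Proof.
  rewrite (surjective_pairing (Nat.iter n (S_map al r) (x, y))). rewrite iterS_fst. reflexivity.
Qed.

Lemma iterS_shift (al : R) (r : R -> R) (Hp : forall x, r (x + 1) = r x) n x y (k : Z) d :
  Nat.iter n (S_map al r) (x + IZR k, y + d) =
  (fst (Nat.iter n (S_map al r) (x, y)) + IZR k, snd (Nat.iter n (S_map al r) (x, y)) + d).
Proof.
  induction n; simpl; auto. rewrite IHn.
  destruct (Nat.iter n (S_map al r) (x, y)) as [a b]. unfold S_map; simpl.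
  rewrite r_int by auto. f_equal; ring.
Qed.

Lemma iterSi_shift (al : R) (r : R -> R) (Hp : forall x, r (x + 1) = r x) n x y (k : Z) d :
  Nat.iter n (S_inv al r) (x + IZR k, y + d) =
  (fst (Nat.iter n (S_inv al r) (x, y)) + IZR k, snd (Nat.iter n (S_inv al r) (x, y)) + d).
Proof.
  induction n; simpl; auto. rewrite IHn.
  destruct (Nat.iter n (S_inv al r) (x, y)) as [a b]. unfold S_inv; simpl.
  replace (a + IZR k - al) with (a - al + IZR k) by ring. rewrite r_int by auto. f_equal; ring.
Qed.

Lemma iter_inv (al : R) (r : R -> R) n p : Nat.iter n (S_inv al r) (Nat.iter n (S_map al r) p) = p.
Proof.
  induction n; [reflexivity|].
  change (Nat.iter (S n) (S_map al r) p) with (S_map al r (Nat.iter n (S_map al r) p)).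
  rewrite Nat.iter_succ_r.
  replace (S_inv al r (S_map al r (Nat.iter n (S_map al r) p))) with (Nat.iter n (S_map al r) p); auto.
  destruct (Nat.iter n (S_map al r) p) as [a b]. unfold S_inv, S_map; simpl.
  replace (a + al - al) with a by ring. f_equal; ring.
Qed.

Lemma S_iter_neg (al : R) (r : R -> R) n z : exists m, S_iter al r m z = Nat.iter n (S_inv al r) z.
Proof.
  destruct n. exists 0%Z; reflexivity.
  exists (Zneg (Pos.of_succ_nat n)). simpl S_iter. rewrite SuccNat2Pos.id_succ. reflexivity.
Qed.

Lemma frac_IZR (k : Z) : frac (IZR k) = 0.
Proof. apply (frac_unique _ k); [lra|ring]. Qed.

Lemma BC_of_orb (al : R) (r : R -> R) (Hp : forall x, r (x + 1) = r x) xs ys n x0 :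
  (forall m : Z, frac (snd (S_iter al r m (xs, ys))) <> 0) ->
  frac (x0 + INR n * al) = xs -> forall k : Z, ys + IZR k <> Defs.sigma al r n x0 0.
Proof.
  intros H Hf k Hk.
  set (w := Int_part (x0 + INR n * al)).
  assert (Ew : x0 + INR n * al = xs + IZR w) by (rewrite <- Hf; unfold frac, w; ring).
  pose proof (iter_inv al r n (x0, 0)) as Hi. rewrite iterS_pair in Hi. rewrite Ew in Hi.
  destruct (S_iter_neg al r n (xs, ys)) as [m Hm]. specialize (H m). rewrite Hm in H.
  replace (xs, ys) with (xs + IZR w + IZR (- w), Defs.sigma al r n x0 0 + (ys - Defs.sigma al r n x0 0)) in H.
  - rewrite iterSi_shift in H by auto. rewrite Hi in H. simpl in H.
    apply H. replace (0 + (ys - Defs.sigma al r n x0 0)) with (IZR (- k)) by (rewrite opp_IZR; lra).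
    apply frac_IZR.
  - rewrite opp_IZR. f_equal; ring.
Qed.

Lemma sigma_period (al : R) (r : R -> R) (Hp : forall x, r (x + 1) = r x) n x (k : Z) : Defs.sigma al r n (x + IZR k) 0 = Defs.sigma al r n x 0.
Proof.
  unfold Defs.sigma. replace (x + IZR k, 0) with (x + IZR k, 0 + 0) by (f_equal; ring).
  rewrite iterS_shift by auto. simpl. ring.
Qed.

Lemma sigma_cv (al : R) (r : R -> R) (Hc : continuity r) n (u : nat -> R) x0 : Un_cv u x0 ->
  Un_cv (fun j => Defs.sigma al r n (u j) 0) (Defs.sigma al r n x0 0).
Proof.
  intros Hu. induction n.
  - unfold Defs.sigma; simpl. apply cv_const.
  - eapply cv_ev; [exists 0%nat; intros j _; apply sigma_S|].
    rewrite sigma_S. apply CV_plus; auto.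
    apply (continuity_seq r (fun j => u j + INR n * al)). apply Hc.
    apply CV_plus; auto. apply cv_const.
Qed.

Lemma distT_near a b d : distT a b < d -> exists k : Z, Rabs (a - b - IZR k) < d.
Proof.
  unfold distT. pose proof (frac_range (a - b)). unfold Rmin; destruct Rle_dec.
  - intros. exists (Int_part (a - b)). unfold frac in *. rewrite Rabs_right; lra.
  - intros. exists (Int_part (a - b) + 1)%Z. rewrite plus_IZR. unfold frac in *.
    rewrite Rabs_left; simpl; lra.
Qed.

Lemma round_cv (xs : nat -> R) x0 : Tcv xs x0 ->
  Un_cv (fun j => xs j - IZR (Int_part (xs j - x0 + /2))) x0.
Proof.
  intros HT e He. set (d := Rmin e (/2)).
  assert (Hd : 0 < d /\ d <= e /\ d <= /2) by (unfold d, Rmin; destruct Rle_dec; lra).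
  destruct (HT d ltac:(lra)) as [N HN]. exists N; intros j Hj.
  destruct (HN j Hj) as [k Hk]. apply abslt in Hk.
  rewrite (Int_part_unique _ k) by lra. unfold Rdist. apply abslt. lra.
Qed.


Definition w (n : nat) : R := (/2) ^ (S n).

Lemma w_pos n : 0 < w n.
Proof. unfold w. apply pow_lt. lra. Qed.

Lemma sum_w N : sum_f_R0 w N = 1 - (/2) ^ (S N).
Proof.
  induction N. simpl; unfold w; simpl; field. rewrite tech5, IHN. unfold w. simpl. field.
Qed.

Lemma pow_small e : e > 0 -> exists N, (/2) ^ (S N) < e.
Proof.
  intros He. destruct (pow_lt_1_zero (/2) ltac:(rewrite Rabs_right; lra) e He) as [N HN].
  exists N. specialize (HN (S N) ltac:(lia)). rewrite Rabs_right in HN; auto.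
  left; apply pow_lt; lra.
Qed.

Lemma w_cv : Un_cv (fun N => sum_f_R0 w N) 1.
Proof.
  intros e He. destruct (pow_lt_1_zero (/2) ltac:(rewrite Rabs_right; lra) e He) as [N HN].
  exists N; intros n Hn. rewrite sum_w. unfold Rdist.
  replace (1 - (/2) ^ S n - 1) with (- (/2) ^ S n) by ring. rewrite Rabs_Ropp. apply HN. lia.
Qed.

Lemma series_spec (a : nat -> R) : (forall n, 0 <= a n <= 1) ->
  infinite_sum (fun n => (/2) ^ (S n) * a n) (series (fun n => (/2) ^ (S n) * a n)).
Proof.
  intros Ha. unfold series. apply epsilon_spec.
  destruct (Rseries_CV_comp (fun n => (/2) ^ (S n) * a n) w) as [l Hl].
  - intros n. pose proof (w_pos n). unfold w in *. specialize (Ha n). split.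
    + apply Rmult_le_pos; lra.
    + rewrite <- (Rmult_1_r ((/2) ^ (S n))) at 2. apply Rmult_le_compat_l; lra.
  - exists 1; apply w_cv.
  - exists l; exact Hl.
Qed.

Lemma sum_mono (a : nat -> R) : (forall n, 0 <= a n) -> forall M i, sum_f_R0 a M <= sum_f_R0 a (M + i).
Proof.
  intros Ha M i. induction i. rewrite Nat.add_0_r; lra.
  rewrite Nat.add_succ_r, tech5. specialize (Ha (S (M + i))). lra.
Qed.

Lemma series_bounds (a : nat -> R) N : (forall n, 0 <= a n <= 1) ->
  sum_f_R0 (fun n => (/2) ^ (S n) * a n) N <= series (fun n => (/2) ^ (S n) * a n) <=
  sum_f_R0 (fun n => (/2) ^ (S n) * a n) N + (/2) ^ (S N).
Proof.
  intros Ha. pose proof (series_spec a Ha) as Hs.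
  assert (Hnn : forall n, 0 <= (/2) ^ (S n) * a n).
  { intros n. apply Rmult_le_pos; [left; apply pow_lt; lra| apply Ha]. }
  split.
  - apply sum_incr; auto.
  - apply (Rle_cv_lim (Un := fun M => sum_f_R0 (fun n => (/2) ^ (S n) * a n) M)
                      (Vn := fun _ => sum_f_R0 (fun n => (/2) ^ (S n) * a n) N + (/2) ^ (S N))); auto.
    2: apply cv_const.
    intros M. destruct (Nat.le_gt_cases M N) as [HM|HM].
    + replace N with (M + (N - M))%nat by lia. pose proof (sum_mono _ Hnn M (N - M)).
      assert (0 < (/2) ^ S (M + (N - M))) by (apply pow_lt; lra). lra.
    + assert (G : forall i, sum_f_R0 (fun n => (/2) ^ (S n) * a n) (N + i) <=
                 sum_f_R0 (fun n => (/2) ^ (S n) * a n) N + (/2) ^ (S N) - (/2) ^ (S (N + i))).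
      { induction i. rewrite Nat.add_0_r; lra.
        rewrite Nat.add_succ_r, tech5. destruct (Ha (S (N + i))).
        assert (E : (/2) ^ S (S (N + i)) = / 2 * (/2) ^ S (N + i)) by (simpl; ring).
        assert (0 < (/2) ^ S (N + i)) by (apply pow_lt; lra).
        assert ((/2) ^ S (S (N + i)) * a (S (N + i)) <= (/2) ^ S (S (N + i))).
        { rewrite <- (Rmult_1_r ((/2) ^ S (S (N + i)))) at 2. apply Rmult_le_compat_l; [rewrite E; lra|lra]. }
        rewrite E in *. lra. }
      replace M with (N + (M - N))%nat by lia. specialize (G (M - N)%nat).
      assert (0 < (/2) ^ S (N + (M - N))) by (apply pow_lt; lra). lra.
Qed.

Lemma partial_semi (a : nat -> nat -> R) (b c : nat -> R) e :
  (forall n, exists N, forall j, (j >= N)%nat -> b n - e <= a j n <= c n + e) ->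
  forall N, exists J, forall j, (j >= J)%nat ->
    sum_f_R0 (fun n => (/2) ^ (S n) * b n) N - e * sum_f_R0 w N <= sum_f_R0 (fun n => (/2) ^ (S n) * a j n) N <=
    sum_f_R0 (fun n => (/2) ^ (S n) * c n) N + e * sum_f_R0 w N.
Proof.
  intros H N. induction N.
  - destruct (H 0%nat) as [J HJ]. exists J; intros j Hj. specialize (HJ j Hj). simpl. unfold w; simpl.
    assert (0 < /2 * 1) by lra. split; nra.
  - destruct IHN as [J1 H1]. destruct (H (S N)) as [J2 H2].
    exists (max J1 J2); intros j Hj. specialize (H1 j ltac:(lia)); specialize (H2 j ltac:(lia)).
    rewrite !tech5. pose proof (w_pos (S N)). unfold w in *. split; nra.
Qed.

Lemma series_semi (a : nat -> nat -> R) (b c : nat -> R) :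
  (forall j n, 0 <= a j n <= 1) -> (forall n, 0 <= b n <= 1) -> (forall n, 0 <= c n <= 1) ->
  (forall n e, e > 0 -> exists N, forall j, (j >= N)%nat -> b n - e <= a j n <= c n + e) ->
  forall e, e > 0 -> exists N, forall j, (j >= N)%nat ->
    series (fun n => (/2) ^ (S n) * b n) - e <= series (fun n => (/2) ^ (S n) * a j n) <=
    series (fun n => (/2) ^ (S n) * c n) + e.
Proof.
  intros Ha Hb Hc H e He.
  destruct (pow_small (e/2) ltac:(lra)) as [N HN].
  destruct (partial_semi a b c (e/2) (fun n => H n (e/2) ltac:(lra)) N) as [J HJ].
  exists J; intros j Hj. specialize (HJ j Hj).
  pose proof (series_bounds _ N Hb). pose proof (series_bounds _ N Hc). pose proof (series_bounds _ N (Ha j)).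
  rewrite sum_w in HJ. assert (0 < (/2) ^ S N) by (apply pow_lt; lra).
  assert (e / 2 * (1 - (/2) ^ S N) <= e / 2) by nra.
  split; lra.
Qed.

Lemma series_le_add (a b c : nat -> R) : (forall n, 0 <= a n <= 1) -> (forall n, 0 <= b n <= 1) -> (forall n, 0 <= c n <= 1) ->
  (forall n, a n <= b n + c n) ->
  series (fun n => (/2) ^ (S n) * a n) <= series (fun n => (/2) ^ (S n) * b n) + series (fun n => (/2) ^ (S n) * c n).
Proof.
  intros Ha Hb Hc H.
  pose proof (series_spec a Ha) as Sa. pose proof (series_spec b Hb) as Sb. pose proof (series_spec c Hc) as Sc.
  apply (Rle_cv_lim (Un := fun N => sum_f_R0 (fun n => (/2) ^ (S n) * a n) N)
                    (Vn := fun N => sum_f_R0 (fun n => (/2) ^ (S n) * b n) N + sum_f_R0 (fun n => (/2) ^ (S n) * c n) N)); auto.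
  - intros N. rewrite <- plus_sum. apply sum_Rle. intros n _. specialize (H n).
    assert (0 < (/2) ^ S n) by (apply pow_lt; lra). nra.
  - apply CV_plus; auto.
Qed.


Lemma W1_split xb1 xb2 x1s y1s psi phi t lo len : PP xb1 xb2 x1s psi phi -> 0 <= len <= 1 ->
  W1 xb1 xb2 x1s y1s psi phi t (Arc lo (lo + len) true true) <=
  W1 xb1 xb2 x1s y1s psi phi t (Arc lo (lo + len) true false) +
  W1 xb1 xb2 x1s y1s psi phi t (Arc (lo + len) (lo + len + 0) true true) /\
  W1 xb1 xb2 x1s y1s psi phi t (Arc lo (lo + len) true true) <=
  W1 xb1 xb2 x1s y1s psi phi t (Arc lo (lo + len) false true) +
  W1 xb1 xb2 x1s y1s psi phi t (Arc lo (lo + 0) true true).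
Proof.
  intros HP Hl. destruct (Req_dec t x1s) as [E|E].
  - pose proof HP as (_&_&_&_&_&_&_&_&_&_&_&Hx). subst t.
    rewrite !W1_in by lra. rewrite Req_b_true by auto.
    assert (D : forall A B C, (in_arc A y1s -> in_arc B y1s \/ in_arc C y1s) -> dirac y1s A <= dirac y1s B + dirac y1s C).
    { intros A B C H. unfold dirac.
      destruct (excluded_middle_informative (in_arc A y1s)) as [a|a];
      destruct (excluded_middle_informative (in_arc B y1s)) as [b|b];
      destruct (excluded_middle_informative (in_arc C y1s)) as [c|c]; try lra.
      destruct (H a); tauto. }
    split; apply D; intros [k [K1 K2]]; simpl in *.
    + destruct (Req_dec (y1s + IZR k) (lo + len)).
      * right; exists k; simpl; lra.
      * left; exists k; simpl; lra.
    + destruct (Req_dec (y1s + IZR k) lo).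
      * right; exists k; simpl; lra.
      * left; exists k; simpl; lra.
  - rewrite !(W1_Phi _ _ _ _ _ _ t lo len) by auto.
    pose proof (W1_bounds xb1 xb2 x1s y1s psi phi t (lo + len) 0 true true HP ltac:(lra)).
    pose proof (W1_bounds xb1 xb2 x1s y1s psi phi t lo 0 true true HP ltac:(lra)).
    split; lra.
Qed.

Lemma refl_arc a b lc rc : refl (Arc a (a + b) lc rc) = Arc (1 - a - b) (1 - a - b + b) rc lc.
Proof. unfold refl; simpl; f_equal; ring. Qed.

Lemma mu0_bounds xb1 xb2 x1s y1s psi phi x lo len lc rc : PP xb1 xb2 x1s psi phi -> 0 < xb1 -> xb2 < 1/2 -> 0 <= len <= 1 ->
  0 <= mu0 xb1 xb2 x1s y1s psi phi x (Arc lo (lo + len) lc rc) <= 1.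
Proof.
  intros HP Hb0 Hb Hl. destruct (Rlt_dec (xb1 + 1/2) (frac x)) as [r|r]; [destruct (Rlt_dec (frac x) (xb2 + 1/2)) as [r'|r']|].
  - rewrite mu0_reg2 by lra. rewrite refl_arc. apply W1_bounds; auto.
  - rewrite mu0_reg1 by lra. apply W1_bounds; auto.
  - rewrite mu0_reg1 by lra. apply W1_bounds; auto.
Qed.

Lemma mu0_split xb1 xb2 x1s y1s psi phi x lo len : PP xb1 xb2 x1s psi phi -> 0 < xb1 -> xb2 < 1/2 -> 0 <= len <= 1 ->
  mu0 xb1 xb2 x1s y1s psi phi x (Arc lo (lo + len) true true) <=
  mu0 xb1 xb2 x1s y1s psi phi x (Arc lo (lo + len) true false) +
  mu0 xb1 xb2 x1s y1s psi phi x (Arc (lo + len) (lo + len + 0) true true).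
Proof.
  intros HP Hb0 Hb Hl.
  destruct (Rlt_dec (xb1 + 1/2) (frac x)) as [r|r]; [destruct (Rlt_dec (frac x) (xb2 + 1/2)) as [r'|r']|].
  - rewrite !mu0_reg2 by lra. rewrite !refl_arc.
    replace (1 - (lo + len) - 0) with (1 - lo - len) by ring.
    replace (1 - lo - len + 0) with (1 - lo - len + 0) by ring.
    apply W1_split; auto.
  - rewrite !mu0_reg1 by lra. apply W1_split; auto.
  - rewrite !mu0_reg1 by lra. apply W1_split; auto.
Qed.

Lemma shift_cc c y : shift c (cc 0 y) = Arc c (c + y) true true.
Proof. unfold shift, cc; simpl; f_equal; ring. Qed.
Lemma shift_co c y : shift c (co 0 y) = Arc c (c + y) true false.
Proof. unfold shift, co; simpl; f_equal; ring. Qed.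
Lemma shift_pt c y : shift c (cc y y) = Arc (c + y) (c + y + 0) true true.
Proof. unfold shift, cc; simpl; f_equal; ring. Qed.

Lemma cvT_Tcv xs x0 : cvT xs x0 -> Tcv xs x0.
Proof.
  intros H d Hd. destruct (H d Hd) as [N HN]. exists N; intros j Hj.
  apply distT_near. apply HN; auto.
Qed.

Lemma mun_bounds al r xb1 xb2 x1s y1s psi phi n x y : PP xb1 xb2 x1s psi phi -> 0 < xb1 -> xb2 < 1/2 -> 0 <= y <= 1 ->
  0 <= mun al r xb1 xb2 x1s y1s psi phi n x (cc 0 y) <= 1 /\
  0 <= mun al r xb1 xb2 x1s y1s psi phi n x (co 0 y) <= 1 /\
  0 <= mun al r xb1 xb2 x1s y1s psi phi n x (cc y y) <= 1.
Proof.
  intros. unfold mun. rewrite shift_cc, shift_co, shift_pt.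
  split; [|split]; apply mu0_bounds; auto; lra.
Qed.

Lemma mun_split al r xb1 xb2 x1s y1s psi phi n x y : PP xb1 xb2 x1s psi phi -> 0 < xb1 -> xb2 < 1/2 -> 0 <= y <= 1 ->
  mun al r xb1 xb2 x1s y1s psi phi n x (cc 0 y) <=
  mun al r xb1 xb2 x1s y1s psi phi n x (co 0 y) + mun al r xb1 xb2 x1s y1s psi phi n x (cc y y).
Proof.
  intros. unfold mun. rewrite shift_cc, shift_co, shift_pt. apply mu0_split; auto.
Qed.

Lemma mun_semi al r xb1 xb2 x1s y1s psi phi (xs ys : nat -> R) x0 y0 :
  PP xb1 xb2 x1s psi phi -> frac (psi x1s) = frac y1s -> 0 < psi x1s < 1 -> 0 < xb1 -> xb2 < 1/2 ->
  continuity r -> (forall x, r (x + 1) = r x) ->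
  (forall m : Z, frac (snd (S_iter al r m (x1s, y1s))) <> 0) ->
  (forall m : Z, frac (snd (S_iter al r m (x1s + 1/2, 1 - y1s))) <> 0) ->
  cvT xs x0 -> Un_cv ys y0 -> (forall j, 0 <= ys j <= 1) -> 0 <= y0 <= 1 ->
  forall n eps, eps > 0 -> exists N, forall j, (j >= N)%nat ->
    mun al r xb1 xb2 x1s y1s psi phi n x0 (co 0 y0) - eps <=
    mun al r xb1 xb2 x1s y1s psi phi n (xs j) (cc 0 (ys j)) <=
    mun al r xb1 xb2 x1s y1s psi phi n x0 (cc 0 y0) + eps.
Proof.
  intros HP Hfr Hp01 Hb0 Hb12 Hrc Hp O1 O2 Hx Hy Hyb Hy0 n eps Heps.
  pose proof (cvT_Tcv _ _ Hx) as HT.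
  assert (HT' : Tcv (fun j => xs j + INR n * al) (x0 + INR n * al)).
  { intros d Hd. destruct (HT d Hd) as [N HN]. exists N; intros j Hj.
    destruct (HN j Hj) as [k Hk]. exists k.
    replace (xs j + INR n * al - (x0 + INR n * al) - IZR k) with (xs j - x0 - IZR k) by ring. auto. }
  assert (Hlo : Un_cv (fun j => Defs.sigma al r n (xs j) 0) (Defs.sigma al r n x0 0)).
  { apply (cv_ev _ (fun j => Defs.sigma al r n (xs j - IZR (Int_part (xs j - x0 + /2))) 0)).
    - exists 0%nat; intros j _.
      rewrite <- (sigma_period al r Hp n (xs j - IZR (Int_part (xs j - x0 + /2))) (Int_part (xs j - x0 + /2))).
      f_equal; ring.
    - apply sigma_cv; auto. apply round_cv; auto. }
  destruct (mu0_semi xb1 xb2 x1s y1s psi phi (fun j => xs j + INR n * al) (fun j => Defs.sigma al r n (xs j) 0) ys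
     (x0 + INR n * al) (Defs.sigma al r n x0 0) y0 HP Hfr Hp01 Hb0 Hb12 HT' Hlo Hy Hyb Hy0) with (eps := eps) as [N HN]; auto.
  - intros Hf k. apply (BC_of_orb al r Hp x1s y1s n x0 O1 Hf k).
  - intros Hf k. apply (BC_of_orb al r Hp (x1s + 1/2) (1 - y1s) n x0 O2 Hf k).
  - exists N; intros j Hj. unfold mun. rewrite !shift_cc, shift_co. apply HN; auto.
Qed.

Lemma lam_cc y : lam (cc 0 y) = y.
Proof. unfold lam, cc; simpl; ring. Qed.
Lemma lam_co y : lam (co 0 y) = y.
Proof. unfold lam, co; simpl; ring. Qed.
Lemma lam_pt y : lam (cc y y) = 0.
Proof. unfold lam, cc; simpl; ring. Qed.

Lemma mu_semi al r xb1 xb2 x1s y1s psi phi (xs ys : nat -> R) x0 y0 :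
  PP xb1 xb2 x1s psi phi -> frac (psi x1s) = frac y1s -> 0 < psi x1s < 1 -> 0 < xb1 -> xb2 < 1/2 ->
  continuity r -> (forall x, r (x + 1) = r x) ->
  (forall m : Z, frac (snd (S_iter al r m (x1s, y1s))) <> 0) ->
  (forall m : Z, frac (snd (S_iter al r m (x1s + 1/2, 1 - y1s))) <> 0) ->
  cvT xs x0 -> Un_cv ys y0 -> (forall j, 0 <= ys j <= 1) -> 0 <= y0 <= 1 ->
  forall eps, eps > 0 -> exists N, forall j, (j >= N)%nat ->
    mu al r xb1 xb2 x1s y1s psi phi x0 (co 0 y0) - eps <=
    mu al r xb1 xb2 x1s y1s psi phi (xs j) (cc 0 (ys j)) <=
    mu al r xb1 xb2 x1s y1s psi phi x0 (cc 0 y0) + eps.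
Proof.
  intros HP Hfr Hp01 Hb0 Hb12 Hrc Hp O1 O2 Hx Hy Hyb Hy0 eps Heps.
  destruct (series_semi (fun j n => mun al r xb1 xb2 x1s y1s psi phi n (xs j) (cc 0 (ys j)))
    (fun n => mun al r xb1 xb2 x1s y1s psi phi n x0 (co 0 y0))
    (fun n => mun al r xb1 xb2 x1s y1s psi phi n x0 (cc 0 y0))) with (e := eps) as [N1 H1]; auto.
  - intros j n. apply mun_bounds; auto.
  - intros n. apply mun_bounds; auto.
  - intros n. apply mun_bounds; auto.
  - intros n e He. apply (mun_semi al r xb1 xb2 x1s y1s psi phi xs ys x0 y0); auto.
  - destruct (cv_ev_near ys y0 eps Hy Heps) as [N2 H2].
    exists (max N1 N2); intros j Hj. specialize (H1 j ltac:(lia)); specialize (H2 j ltac:(lia)).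
    apply abslt in H2. unfold mu; rewrite ?lam_cc, ?lam_co, ?lam_pt. split; lra.
Qed.

Lemma mu_split al r xb1 xb2 x1s y1s psi phi x y : PP xb1 xb2 x1s psi phi -> 0 < xb1 -> xb2 < 1/2 -> 0 <= y <= 1 ->
  mu al r xb1 xb2 x1s y1s psi phi x (cc 0 y) <=
  mu al r xb1 xb2 x1s y1s psi phi x (co 0 y) + mu al r xb1 xb2 x1s y1s psi phi x (cc y y).
Proof.
  intros. unfold mu; rewrite ?lam_cc, ?lam_co, ?lam_pt.
  pose proof (series_le_add (fun n => mun al r xb1 xb2 x1s y1s psi phi n x (cc 0 y))
    (fun n => mun al r xb1 xb2 x1s y1s psi phi n x (co 0 y))
    (fun n => mun al r xb1 xb2 x1s y1s psi phi n x (cc y y))).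
  assert (series (fun n => (/2) ^ (S n) * mun al r xb1 xb2 x1s y1s psi phi n x (cc 0 y)) <=
     series (fun n => (/2) ^ (S n) * mun al r xb1 xb2 x1s y1s psi phi n x (co 0 y)) +
     series (fun n => (/2) ^ (S n) * mun al r xb1 xb2 x1s y1s psi phi n x (cc y y))).
  { apply H3; intros n; try apply mun_bounds; auto. apply mun_split; auto. }
  lra.
Qed.


Lemma small_inv e : e > 0 -> exists N, forall j, (j >= N)%nat -> / (INR j + 1) < e.
Proof.
  intros He. destruct (INR_unbounded (/ e)) as [N HN]. exists N; intros j Hj.
  assert (INR N <= INR j) by (apply le_INR; lia).
  assert (0 < / e) by (apply Rinv_0_lt_compat; lra).
  rewrite <- (Rinv_inv e). apply Rinv_lt_contravar.
  - apply Rmult_lt_0_compat; lra.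
  - lra.
Qed.

Lemma lil (u : nat -> R) : liminf_le_limsup u.
Proof.
  intros a b Hab [H1 H2]. destruct (H1 ((a - b)/3) ltac:(lra)) as [N1 HN1].
  destruct (H2 ((a - b)/3) ltac:(lra)) as [N2 HN2].
  specialize (HN1 (max N1 N2) ltac:(lia)); specialize (HN2 (max N1 N2) ltac:(lia)). lra.
Qed.

Theorem corollary3
  (al : R) (r : R -> R) (xb1 xb2 x1s y1s : R) (psi phi : R -> R)
  (* alpha irrational *)
  (Hal : forall p q : Z, q <> 0%Z -> al <> IZR p / IZR q)
  (* r : T^1 -> R continuous *)
  (Hrc : continuity r) (Hrper : forall x, r (x + 1) = r x)
  (Hrodd : forall x, r (x + 1/2) = - r x)
  (Hr0 : r 0 = 0) (Hr12 : r (1/2) = 0)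
  (Hrpos : forall x, 0 < x < 1/2 -> 0 < r x < 1/4)
  (* S minimal: every (full) orbit is dense in T^2 *)
  (Hmin : forall x y u v eps, eps > 0 -> exists m : Z,
      distT (fst (S_iter al r m (x, y))) u < eps /\
      distT (snd (S_iter al r m (x, y))) v < eps)
  (* x1s rational in (0.1,0.2) *)
  (Hx1q : exists p q : Z, q <> 0%Z /\ x1s = IZR p / IZR q)
  (Hx1 : 1/10 < x1s < 2/10)
  (* orbit condition for z1 = (x1s,y1s) and z2 = (x1s+1/2, 1-y1s) *)
  (Horb : forall (m : Z) (z : R * R), z = (x1s, y1s) \/ z = (x1s + 1/2, 1 - y1s) ->
      frac (snd (S_iter al r m z)) <> 0 /\
      frac (snd (S_iter al r m z) + r (fst (S_iter al r m z))) <> 0)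
  (Hxb : xb1 < x1s < xb2) (Hxb0 : 0 < xb1) (Hxb12 : xb2 < 1/2)
  (Hpsic : cont_on xb1 xb2 psi) (Hphic : cont_on xb1 xb2 phi)
  (Hpsir : forall x, xb1 <= x <= xb2 -> 0 <= psi x <= 1)
  (Hphir : forall x, xb1 <= x <= xb2 -> 0 <= phi x <= 1)
  (Hpsi1 : psi xb1 = 0) (Hphi1 : phi xb1 = 1)
  (Hpsi2 : psi xb2 = 1) (Hphi2 : phi xb2 = 0)
  (Hlt : forall x, xb1 <= x < x1s -> psi x < phi x)
  (Hgt : forall x, x1s < x <= xb2 -> psi x > phi x)
  (Heq : psi x1s = phi x1s) (Heqy : frac (psi x1s) = frac y1s) :
  (forall (xs ys : nat -> R) (x0 y0 : R),
      cvT xs x0 -> Un_cv ys y0 ->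
      (forall j, 0 <= ys j <= 1) -> 0 <= y0 <= 1 ->
      (forall n : nat,
        let u := fun j => mun al r xb1 xb2 x1s y1s psi phi n (xs j) (cc 0 (ys j)) in
        liminf_ge u (mun al r xb1 xb2 x1s y1s psi phi n x0 (co 0 y0)) /\
        liminf_le_limsup u /\
        limsup_le u (mun al r xb1 xb2 x1s y1s psi phi n x0 (cc 0 y0))) /\
      (let u := fun j => mu al r xb1 xb2 x1s y1s psi phi (xs j) (cc 0 (ys j)) in
        liminf_ge u (mu al r xb1 xb2 x1s y1s psi phi x0 (co 0 y0)) /\
        liminf_le_limsup u /\
        limsup_le u (mu al r xb1 xb2 x1s y1s psi phi x0 (cc 0 y0)))) /\
  (forall x0 y0 : R, 0 <= y0 <= 1 ->
      ~ cont2_at (fun x y => mu al r xb1 xb2 x1s y1s psi phi x (cc 0 y)) x0 y0 ->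
      mu al r xb1 xb2 x1s y1s psi phi x0 (cc y0 y0) > 0).
Proof.
  assert (HP : PP xb1 xb2 x1s psi phi) by exact (conj Hpsic (conj Hphic (conj Hpsir (conj Hphir (conj Hpsi1 (conj Hphi1 (conj Hpsi2 (conj Hphi2 (conj Hlt (conj Hgt (conj Heq Hxb))))))))))).
  assert (O1 : forall m : Z, frac (snd (S_iter al r m (x1s, y1s))) <> 0)
    by (intros m; exact (proj1 (Horb m (x1s, y1s) (or_introl eq_refl)))).
  assert (O2 : forall m : Z, frac (snd (S_iter al r m (x1s + 1/2, 1 - y1s))) <> 0)
    by (intros m; exact (proj1 (Horb m (x1s + 1/2, 1 - y1s) (or_intror eq_refl)))).
  assert (Hp01 : 0 < psi x1s < 1).
  { pose proof (O1 0%Z) as H0. simpl in H0. rewrite <- Heqy in H0.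
    pose proof (Hpsir x1s ltac:(lra)).
    destruct (Req_dec (psi x1s) 0) as [E|E].
    { rewrite E in H0. exfalso; apply H0. apply (frac_IZR 0). }
    destruct (Req_dec (psi x1s) 1) as [E'|E'].
    { rewrite E' in H0. exfalso; apply H0. apply (frac_IZR 1). }
    lra. }
  split.
  - intros xs ys x0 y0 Hx Hy Hyb Hy0. split.
    + intros n. cbv zeta. split; [|split].
      * intros eps Heps.
        destruct (mun_semi al r xb1 xb2 x1s y1s psi phi xs ys x0 y0 HP Heqy Hp01 Hxb0 Hxb12 Hrc Hrper O1 O2 Hx Hy Hyb Hy0 n eps Heps) as [N HN].
        exists N; intros j Hj; apply HN; auto.
      * apply lil.
      * intros eps Heps.
        destruct (mun_semi al r xb1 xb2 x1s y1s psi phi xs ys x0 y0 HP Heqy Hp01 Hxb0 Hxb12 Hrc Hrper O1 O2 Hx Hy Hyb Hy0 n eps Heps) as [N HN].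
        exists N; intros j Hj; apply HN; auto.
    + cbv zeta. split; [|split].
      * intros eps Heps.
        destruct (mu_semi al r xb1 xb2 x1s y1s psi phi xs ys x0 y0 HP Heqy Hp01 Hxb0 Hxb12 Hrc Hrper O1 O2 Hx Hy Hyb Hy0 eps Heps) as [N HN].
        exists N; intros j Hj; apply HN; auto.
      * apply lil.
      * intros eps Heps.
        destruct (mu_semi al r xb1 xb2 x1s y1s psi phi xs ys x0 y0 HP Heqy Hp01 Hxb0 Hxb12 Hrc Hrper O1 O2 Hx Hy Hyb Hy0 eps Heps) as [N HN].
        exists N; intros j Hj; apply HN; auto.
  - intros x0 y0 Hy0 Hnc.
    destruct (Rlt_le_dec 0 (mu al r xb1 xb2 x1s y1s psi phi x0 (cc y0 y0))) as [Hpos|Hle]; [exact Hpos|].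
    exfalso; apply Hnc. intros eps Heps.
    set (F := fun x y => mu al r xb1 xb2 x1s y1s psi phi x (cc 0 y)).
    destruct (classic (exists del, del > 0 /\ forall x y, 0 <= y <= 1 -> distT x x0 < del -> Rabs (y - y0) < del ->
      Rabs (F x y - F x0 y0) < eps)) as [Hc|Hn]; [exact Hc|exfalso].
    assert (Hj : forall j : nat, exists p : R * R, 0 <= snd p <= 1 /\ distT (fst p) x0 < / (INR j + 1) /\
       Rabs (snd p - y0) < / (INR j + 1) /\ ~ Rabs (F (fst p) (snd p) - F x0 y0) < eps).
    { intros j. apply NNPP; intros Hno. apply Hn. exists (/ (INR j + 1)). split.
      { apply Rinv_0_lt_compat. pose proof (pos_INR j); lra. }
      intros x y H1 H2 H3. apply NNPP; intros H4. apply Hno. exists (x, y). simpl; auto. }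
    set (f := fun j => proj1_sig (constructive_indefinite_description _ (Hj j))).
    assert (Hf : forall j, 0 <= snd (f j) <= 1 /\ distT (fst (f j)) x0 < / (INR j + 1) /\
       Rabs (snd (f j) - y0) < / (INR j + 1) /\ ~ Rabs (F (fst (f j)) (snd (f j)) - F x0 y0) < eps).
    { intros j. unfold f. destruct (constructive_indefinite_description _ (Hj j)); simpl; auto. }
    assert (Hx : cvT (fun j => fst (f j)) x0).
    { intros e He. destruct (small_inv e He) as [N HN]. exists N; intros j Hj'.
      specialize (HN j Hj'). destruct (Hf j) as (_&H&_). lra. }
    assert (Hy : Un_cv (fun j => snd (f j)) y0).
    { intros e He. destruct (small_inv e He) as [N HN]. exists N; intros j Hj'.
      specialize (HN j Hj'). destruct (Hf j) as (_&_&H&_). unfold Rdist. lra. }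
    destruct (mu_semi al r xb1 xb2 x1s y1s psi phi (fun j => fst (f j)) (fun j => snd (f j)) x0 y0 HP Heqy Hp01
      Hxb0 Hxb12 Hrc Hrper O1 O2 Hx Hy (fun j => proj1 (Hf j)) Hy0 (eps/2) ltac:(lra)) as [N HN].
    specialize (HN N (Nat.le_refl N)). destruct (Hf N) as (_&_&_&H).
    pose proof (mu_split al r xb1 xb2 x1s y1s psi phi x0 y0 HP Hxb0 Hxb12 Hy0).
    apply H. unfold F. apply abslt. lra.
Qed.
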